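(* Let $G=A_5\simeq\mathrm{PSL}_2(\mathbb{F}_4)$ and $H\simeq A_4$. There is a flabby resolution $0\to J_{G/H}\to P\to F\to0$ with $\mathrm{rank}_{\mathbb{Z}}F=16$ such that there is an isomorphism of $A_5$-lattices $$\mathbb{Z}[A_5/C_5]\oplus\mathbb{Z}[A_5/S_3]\simeq\mathbb{Z}[A_5/D_5]\oplus F$$ (rank $22$). In particular $F$ is stably permutation.
   Context: A $G$-lattice is a finitely generated $\mathbb{Z}[G]$-module free over $\mathbb{Z}$. A permutation $G$-lattice is one isomorphic to $\bigoplus_i\mathbb{Z}[G/H_i]$. Stably permutation: $M\oplus P\simeq P'$ with $P,P'$ permutation. $F$ is flabby if $\widehat H^{-1}(H',F)=0$ for all subgroups $H'\le G$. A flabby resolution of $M$ is an exact sequence $0\to M\to P\to F\to0$ with $P$ permutation and $F$ flabby. The Chevalley module is $J_{G/H}=\mathrm{Hom}_{\mathbb{Z}}(I_{G/H},\mathbb{Z})$ where $I_{G/H}=\ker(\mathbb{Z}[G/H]\to\mathbb{Z})$. $D_5$ is dihedral of order $10$; the subgroups $C_5$, $S_3$, $D_5$ of $A_5$ are each unique up to conjugacy. *)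

(* Defs.v *)
From HB Require Import structures.
From mathcomp Require Import all_boot all_order all_algebra all_fingroup all_solvable.
Set Implicit Arguments. Unset Strict Implicit. Unset Printing Implicit Defensive.
Import GRing.Theory.
Local Open Scope ring_scope.

(* Conventions: a G-lattice of Z-rank n is given by matrices rep g : 'M[int]_n,
   acting on row vectors (v |-> v *m rep g), i.e. a right Z[G]-module Z^n. *)
Record lattice (gT : finGroupType) := Lattice {
  rk : nat;
  rep : gT -> 'M[int]_rk }.

Section Lattices.
Local Unset Implicit Arguments.
Context {gT : finGroupType}.
Implicit Types (G H : {group gT}) (L M : lattice gT).

Definition is_Glattice G L : Prop :=
  rep L 1%g = 1%:M /\
  (forall g h, g \in G -> h \in G -> rep L (g * h)%g = rep L g *m rep L h).

Definition equivariant G L M (f : 'M[int]_(rk L, rk M)) : Prop :=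
  forall g, g \in G -> rep L g *m f = f *m rep M g.

Definition lat_iso G L M : Prop :=
  exists (f : 'M[int]_(rk L, rk M)) (f' : 'M[int]_(rk M, rk L)),
    [/\ f *m f' = 1%:M, f' *m f = 1%:M & equivariant G L M f].

Definition dsum L M : lattice gT :=
  @Lattice gT (rk L + rk M) (fun g => block_mx (rep L g) 0 0 (rep M g)).

Definition zero_lattice : lattice gT := @Lattice gT 0 (fun _ => 1%:M).

(* the permutation lattice Z[G/H], basis = right cosets H x (x in G),
   g acts by H x |-> H x g *)
Definition coset_seq G H : seq {set gT} := enum (rcosets H G).
Definition pmat_nat G H (g : gT) (i j : nat) : int :=
  (((nth set0 (coset_seq G H) i :* g)%g) == nth set0 (coset_seq G H) j)%:Z.

Definition Zperm G H : lattice gT :=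
  @Lattice gT (size (coset_seq G H))
    (fun g => \matrix_(i, j) pmat_nat G H g i j).

(* I_{G/H} = ker(Z[G/H] -> Z), with Z-basis e_{k+1} - e_0 (k < [G:H]-1) *)
Definition Iaug G H : lattice gT :=
  @Lattice gT (size (coset_seq G H)).-1
    (fun g => \matrix_(k, l)
       (pmat_nat G H g k.+1 l.+1 - pmat_nat G H g 0 l.+1)).

(* dual lattice Hom_Z(L, Z): (phi.g)(x) = phi(x.g^-1) *)
Definition dual L : lattice gT :=
  @Lattice gT (rk L) (fun g => (rep L g^-1)^T).

Definition Jchev G H : lattice gT := dual (Iaug G H).

Definition is_permutation G L : Prop :=
  exists s : seq {group gT}, all (fun K : {group gT} => K \subset G) s /\
    lat_iso G L (foldr (fun K acc => dsum (Zperm G K) acc) zero_lattice s).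

Definition stably_permutation G L : Prop :=
  exists P P' : lattice gT,
    [/\ is_permutation G P, is_permutation G P' & lat_iso G (dsum L P) P'].

(* Hhat^{-1}(H', F) = ker(N_{H'}) / I_{H'} F vanishes for all H' <= G *)
Definition flabby G F : Prop :=
  forall H' : {group gT}, H' \subset G ->
  forall x : 'rV[int]_(rk F),
    x *m (\sum_(h in H') rep F h) = 0 ->
    exists c : gT -> 'rV[int]_(rk F),
      x = \sum_(h in H') (c h *m rep F h - c h).

Definition short_exact G M P F (i : 'M[int]_(rk M, rk P)) (p : 'M[int]_(rk P, rk F))
  : Prop :=
  [/\ equivariant G M P i, equivariant G P F p,
      (forall u : 'rV[int]_(rk M), u *m i = 0 -> u = 0),
      i *m p = 0 /\
      (forall v : 'rV[int]_(rk P), v *m p = 0 -> exists u, u *m i = v) &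
      (forall w : 'rV[int]_(rk F), exists v, v *m p = w)].

Definition flabby_resolution G M P F i p : Prop :=
  [/\ is_Glattice G P, is_Glattice G F, short_exact G M P F i p,
      is_permutation G P & flabby G F].

End Lattices.

(* Main.v *)
Require Import Defs.
From HB Require Import structures.
From mathcomp Require Import all_boot all_order all_algebra all_fingroup all_solvable.
Set Implicit Arguments. Unset Strict Implicit. Unset Printing Implicit Defensive.

Section Part1.
Import GRing.Theory.
Local Open Scope ring_scope.

Section Gen.
Variable gT : finGroupType.
Implicit Types (G : {group gT}) (L M N : lattice gT).

Lemma equivariant_inv G L M (f : 'M[int]_(rk L, rk M)) f' :
  f *m f' = 1%:M -> f' *m f = 1%:M -> equivariant G L M f -> equivariant G M L f'.
Proof.
move=> ff' f'f eq g Gg.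
have -> : f' *m rep L g = f' *m (rep L g *m f) *m f'.
  by rewrite mulmxA -mulmxA ff' mulmx1.
by rewrite eq // mulmxA f'f mul1mx.
Qed.

Lemma lat_iso_refl G L : lat_iso G L L.
Proof. by exists 1%:M, 1%:M; split; rewrite ?mulmx1 // => g _; rewrite mulmx1 mul1mx. Qed.

Lemma lat_iso_sym G L M : lat_iso G L M -> lat_iso G M L.
Proof.
case=> f [f' [ff' f'f eq]]; exists f', f; split=> //.
exact: equivariant_inv eq.
Qed.

Lemma lat_iso_trans G L M N : lat_iso G L M -> lat_iso G M N -> lat_iso G L N.
Proof.
case=> f1 [f1' [e1 e1' q1]] [f2 [f2' [e2 e2' q2]]].
exists (f1 *m f2), (f2' *m f1'); split.
- by rewrite -mulmxA (mulmxA f2) e2 mul1mx.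
- by rewrite -mulmxA (mulmxA f1') e1' mul1mx.
- by move=> g Gg; rewrite mulmxA q1 // -mulmxA q2 // mulmxA.
Qed.

Lemma lat_iso_dsum G L L' M M' :
  lat_iso G L L' -> lat_iso G M M' -> lat_iso G (dsum L M) (dsum L' M').
Proof.
case=> f1 [f1' [e1 e1' q1]] [f2 [f2' [e2 e2' q2]]].
exists (block_mx f1 0 0 f2), (block_mx f1' 0 0 f2'); split.
- by rewrite mulmx_block !mulmx0 !mul0mx !addr0 !add0r e1 e2 -scalar_mx_block.
- by rewrite mulmx_block !mulmx0 !mul0mx !addr0 !add0r e1' e2' -scalar_mx_block.
- move=> g Gg /=; rewrite !mulmx_block !mulmx0 !mul0mx !addr0 !add0r.
  by rewrite q1 // q2.
Qed.

Lemma lat_iso_comm G L M : lat_iso G (dsum L M) (dsum M L).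
Proof.
exists (block_mx 0 1%:M 1%:M 0), (block_mx 0 1%:M 1%:M 0); split.
- by rewrite mulmx_block !mulmx0 !mul0mx !addr0 !add0r !mulmx1 -scalar_mx_block.
- by rewrite mulmx_block !mulmx0 !mul0mx !addr0 !add0r !mulmx1 -scalar_mx_block.
- move=> g Gg /=; rewrite !mulmx_block !mulmx0 !mul0mx !addr0 !add0r.
  by rewrite !mulmx1 !mul1mx.
Qed.

Lemma lat_iso_zero G L : lat_iso G L (dsum L zero_lattice).
Proof.
exists (row_mx 1%:M 0), (col_mx 1%:M 0); split.
- by rewrite mul_row_col mulmx0 addr0 mulmx1.
- rewrite mul_col_row mulmx1 mulmx0 mul0mx scalar_mx_block; congr block_mx.
  by apply/matrixP=> [[]].
- move=> g Gg /=; rewrite mul_mx_row mul_row_block !mulmx0 !mul0mx !addr0.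
  by rewrite mulmx1 mul1mx.
Qed.

Section Blk.
Variables (a b : nat) (A : 'M[int]_a) (B : 'M[int]_b).
Definition pil := col_mx (1%:M : 'M[int]_a) (0 : 'M_(b, a)).
Definition pir := col_mx (0 : 'M[int]_(a, b)) (1%:M : 'M_b).
Definition iol := row_mx (1%:M : 'M[int]_a) (0 : 'M_(a, b)).
Definition ior := row_mx (0 : 'M[int]_(b, a)) (1%:M : 'M_b).
Lemma B1 : block_mx A 0 0 B *m pil = pil *m A.
Proof. by rewrite mul_block_col mul_col_mx ?mulmx0 ?mul0mx ?addr0 ?mulmx1 ?mul1mx. Qed.
Lemma B2 : block_mx A 0 0 B *m pir = pir *m B.
Proof. by rewrite mul_block_col mul_col_mx ?mulmx0 ?mul0mx ?add0r ?mulmx1 ?mul1mx. Qed.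
Lemma B3 : iol *m block_mx A 0 0 B = A *m iol.
Proof. by rewrite mul_row_block mul_mx_row ?mulmx0 ?mul0mx ?addr0 ?mulmx1 ?mul1mx. Qed.
Lemma B4 : ior *m block_mx A 0 0 B = B *m ior.
Proof. by rewrite mul_row_block mul_mx_row ?mulmx0 ?mul0mx ?add0r ?mulmx1 ?mul1mx. Qed.
Lemma B5 : pil *m iol + pir *m ior = 1%:M.
Proof.
rewrite !mul_col_row ?mulmx1 ?mulmx0 ?mul0mx add_block_mx ?addr0 ?add0r.
by rewrite -scalar_mx_block.
Qed.
Lemma B6 : iol *m pil = 1%:M.
Proof. by rewrite mul_row_col ?mulmx0 ?mul0mx ?addr0 ?mulmx1. Qed.
Lemma B7 : ior *m pir = 1%:M.
Proof. by rewrite mul_row_col ?mulmx0 ?mul0mx ?add0r ?mulmx1. Qed.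
End Blk.

Lemma flabby_iso G L M : lat_iso G L M -> flabby G L -> flabby G M.
Proof.
case=> f [f' [ff' f'f eq]] fL H' sH y Hy.
have eq' := equivariant_inv ff' f'f eq.
have [c Hc] : exists c : gT -> 'rV[int]_(rk L),
    y *m f' = \sum_(h in H') (c h *m rep L h - c h).
  apply: fL => //.
  rewrite -mulmxA mulmx_sumr (eq_bigr (fun h => rep M h *m f')); last first.
    by move=> h hH; rewrite eq' // (subsetP sH).
  by rewrite -mulmx_suml mulmxA Hy mul0mx.
exists (fun h => c h *m f).
have -> : y = y *m f' *m f by rewrite -mulmxA f'f mulmx1.
rewrite Hc mulmx_suml; apply: eq_bigr => h hH.
by rewrite mulmxBl -[c h *m rep L h *m f]mulmxA eq ?(subsetP sH) // mulmxA.
Qed.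

Lemma flabby_dsum G L M : flabby G L -> flabby G M -> flabby G (dsum L M).
Proof.
move=> fL fM H' sH X HX.
set rL := rep L; set rM := rep M.
have hD h : rep (dsum L M) h = block_mx (rL h) 0 0 (rM h) by [].
have [cl Hl] : exists c : gT -> 'rV[int]_(rk L),
    X *m pil (rk L) (rk M) = \sum_(h in H') (c h *m rep L h - c h).
  apply: fL => //; rewrite -mulmxA mulmx_sumr.
  rewrite (eq_bigr (fun h => rep (dsum L M) h *m pil (rk L) (rk M))); last first.
    by move=> h _; rewrite hD B1.
  by rewrite -mulmx_suml mulmxA HX mul0mx.
have [cr Hr] : exists c : gT -> 'rV[int]_(rk M),
    X *m pir (rk L) (rk M) = \sum_(h in H') (c h *m rep M h - c h).
  apply: fM => //; rewrite -mulmxA mulmx_sumr.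
  rewrite (eq_bigr (fun h => rep (dsum L M) h *m pir (rk L) (rk M))); last first.
    by move=> h _; rewrite hD B2.
  by rewrite -mulmx_suml mulmxA HX mul0mx.
exists (fun h => cl h *m iol (rk L) (rk M) + cr h *m ior (rk L) (rk M)).
have -> : X = X *m pil (rk L) (rk M) *m iol (rk L) (rk M)
            + X *m pir (rk L) (rk M) *m ior (rk L) (rk M).
  by rewrite -!mulmxA -mulmxDr B5 mulmx1.
rewrite Hl Hr !mulmx_suml -big_split; apply: eq_bigr => h _.
rewrite hD [in RHS]mulmxDl -[in RHS]mulmxA -[in RHS](mulmxA (cr h)) B3 B4.
by rewrite !mulmxA !mulmxBl opprD addrACA.
Qed.

Lemma flabby_dsum_r G L M : flabby G (dsum L M) -> flabby G M.
Proof.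
move=> fD H' sH y Hy.
set rL := rep L; set rM := rep M.
have hD h : rep (dsum L M) h = block_mx (rL h) 0 0 (rM h) by [].
have Hz : y *m ior (rk L) (rk M) *m \sum_(h in H') rep (dsum L M) h = 0.
  rewrite -mulmxA mulmx_sumr.
  rewrite (eq_bigr (fun h => rep M h *m ior (rk L) (rk M))); last by move=> h _; rewrite hD B4.
  by rewrite -mulmx_suml mulmxA Hy mul0mx.
have [c Hc] := fD H' sH _ Hz.
exists (fun h => c h *m pir (rk L) (rk M)).
have -> : y = y *m ior (rk L) (rk M) *m pir (rk L) (rk M) by rewrite -mulmxA B7 mulmx1.
rewrite Hc mulmx_suml; apply: eq_bigr => h _.
by rewrite mulmxBl hD -[c h *m _ *m pir _ _]mulmxA B2 mulmxA.
Qed.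

End Gen.

End Part1.

Section Part2.
Import GRing.Theory.
Local Open Scope ring_scope.
Definition id5 : seq nat := iota 0 5.
Definition ap (L : seq nat) (k : nat) : nat := nth 0%N L k.
Definition lcomp (L1 L2 : seq nat) : seq nat := [seq ap L2 (ap L1 k) | k <- iota 0 5].
Definition linv (L : seq nat) : seq nat := [seq index k L | k <- iota 0 5].
Fixpoint lpow (L : seq nat) (n : nat) : seq nat :=
  if n is n'.+1 then lcomp (lpow L n') L else id5.
Definition par (L : seq nat) : bool :=
  odd (sumn [seq count (fun j => (i < j)%N && (ap L j < ap L i)%N) (iota 0 5) | i <- iota 0 5]).
Definition All120 : seq (seq nat) := permutations id5.
Definition A5list : seq (seq nat) := filter (fun L => ~~ par L) All120.
Fixpoint lexlt (s t : seq nat) : bool :=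
  match s, t with
  | x :: s', y :: t' => (x < y)%N || ((x == y) && lexlt s' t')
  | _, _ => false end.
Definition canon (R : seq (seq nat)) (x : seq nat) : seq nat :=
  foldr (fun r best => let y := [seq ap x i | i <- r] in if lexlt y best then y else best) x R.
Definition actR (R : seq (seq nat)) (x L : seq nat) : seq nat := canon R (map (ap L) x).
Definition tabf (t : seq (seq int)) (i j : nat) : int := nth 0 (nth [::] t i) j.
Definition tab n m (f : nat -> nat -> int) : seq (seq int) :=
  mkseq (fun i => mkseq (fun j => f i j) m) n.
Definition sumz (s : seq int) : int := foldr (fun a b => a + b) 0 s.
Definition mulcheck n p m (f g h : nat -> nat -> int) : bool :=
  all (fun i => all (fun j => sumz [seq f i k * g k j | k <- iota 0 p] == h i j) (iota 0 m)) (iota 0 n).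
Definition XCl : seq (seq nat) :=
  [:: [:: 0; 1; 2; 3; 4];
  [:: 0; 1; 3; 4; 2];
  [:: 0; 1; 4; 2; 3];
  [:: 0; 2; 1; 4; 3];
  [:: 0; 2; 3; 1; 4];
  [:: 0; 2; 4; 3; 1];
  [:: 0; 3; 1; 2; 4];
  [:: 0; 3; 2; 4; 1];
  [:: 0; 3; 4; 1; 2];
  [:: 0; 4; 1; 3; 2];
  [:: 0; 4; 2; 1; 3];
  [:: 0; 4; 3; 2; 1]].

Definition XDl : seq (seq nat) :=
  [:: [:: 0; 1; 2; 3; 4];
  [:: 0; 1; 2; 4; 3];
  [:: 0; 1; 3; 2; 4];
  [:: 0; 1; 3; 4; 2];
  [:: 0; 1; 4; 2; 3];
  [:: 0; 1; 4; 3; 2]].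

Definition XSl : seq (seq nat) :=
  [:: [:: 0; 1; 2; 3; 4];
  [:: 0; 2; 1; 3; 4];
  [:: 0; 3; 1; 2; 4];
  [:: 0; 4; 1; 2; 3];
  [:: 1; 2; 0; 3; 4];
  [:: 1; 3; 0; 2; 4];
  [:: 1; 4; 0; 2; 3];
  [:: 2; 3; 0; 1; 4];
  [:: 2; 4; 0; 1; 3];
  [:: 3; 4; 0; 1; 2]].

Definition XPl : seq (seq nat) :=
  [:: [:: 0; 1; 2; 3; 4];
  [:: 0; 2; 1; 3; 4];
  [:: 0; 3; 1; 2; 4];
  [:: 0; 4; 1; 2; 3];
  [:: 1; 0; 2; 3; 4];
  [:: 1; 2; 0; 3; 4];
  [:: 1; 3; 0; 2; 4];
  [:: 1; 4; 0; 2; 3];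
  [:: 2; 0; 1; 3; 4];
  [:: 2; 1; 0; 3; 4];
  [:: 2; 3; 0; 1; 4];
  [:: 2; 4; 0; 1; 3];
  [:: 3; 0; 1; 2; 4];
  [:: 3; 1; 0; 2; 4];
  [:: 3; 2; 0; 1; 4];
  [:: 3; 4; 0; 1; 2];
  [:: 4; 0; 1; 2; 3];
  [:: 4; 1; 0; 2; 3];
  [:: 4; 2; 0; 1; 3];
  [:: 4; 3; 0; 1; 2]].

Definition RCl : seq (seq nat) :=
  [:: [:: 0; 1; 2; 3; 4];
  [:: 1; 2; 3; 4; 0];
  [:: 2; 3; 4; 0; 1];
  [:: 3; 4; 0; 1; 2];
  [:: 4; 0; 1; 2; 3]].

Definition RDl : seq (seq nat) :=
  [:: [:: 0; 1; 2; 3; 4];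
  [:: 1; 2; 3; 4; 0];
  [:: 2; 3; 4; 0; 1];
  [:: 3; 4; 0; 1; 2];
  [:: 4; 0; 1; 2; 3];
  [:: 0; 2; 4; 1; 3];
  [:: 1; 3; 0; 2; 4];
  [:: 2; 4; 1; 3; 0];
  [:: 3; 0; 2; 4; 1];
  [:: 4; 1; 3; 0; 2];
  [:: 0; 3; 1; 4; 2];
  [:: 1; 4; 2; 0; 3];
  [:: 2; 0; 3; 1; 4];
  [:: 3; 1; 4; 2; 0];
  [:: 4; 2; 0; 3; 1];
  [:: 0; 4; 3; 2; 1];
  [:: 1; 0; 4; 3; 2];
  [:: 2; 1; 0; 4; 3];
  [:: 3; 2; 1; 0; 4];
  [:: 4; 3; 2; 1; 0]].

Definition RSl : seq (seq nat) :=
  [:: [:: 0; 1; 2; 3; 4];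
  [:: 0; 1; 2; 4; 3];
  [:: 0; 1; 3; 2; 4];
  [:: 0; 1; 3; 4; 2];
  [:: 0; 1; 4; 2; 3];
  [:: 0; 1; 4; 3; 2];
  [:: 1; 0; 2; 3; 4];
  [:: 1; 0; 2; 4; 3];
  [:: 1; 0; 3; 2; 4];
  [:: 1; 0; 3; 4; 2];
  [:: 1; 0; 4; 2; 3];
  [:: 1; 0; 4; 3; 2]].

Definition RPl : seq (seq nat) :=
  [:: [:: 0; 1; 2; 3; 4];
  [:: 0; 1; 2; 4; 3];
  [:: 0; 1; 3; 2; 4];
  [:: 0; 1; 3; 4; 2];
  [:: 0; 1; 4; 2; 3];
  [:: 0; 1; 4; 3; 2]].

Definition Sell : seq nat := [:: 0; 1; 2; 3; 5; 6; 7; 9; 10; 11; 13; 14; 15; 17; 18; 19].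

Definition thtab : seq (seq int) :=
  [:: [:: Negz 0; Posz 1; Posz 1; Posz 1; Posz 1; Posz 1; Negz 2; Negz 3; Negz 3; Negz 2; Negz 1; Negz 1; Negz 1; Negz 0; Negz 0; Negz 0; Negz 1; Negz 1; Negz 0; Negz 1; Negz 2; Negz 1];
  [:: Posz 1; Posz 1; Posz 1; Negz 0; Posz 1; Posz 1; Negz 2; Negz 2; Negz 3; Negz 3; Negz 1; Negz 1; Negz 1; Negz 1; Negz 2; Negz 1; Negz 0; Negz 0; Negz 0; Negz 1; Negz 0; Negz 1];
  [:: Posz 1; Posz 1; Posz 1; Posz 1; Negz 0; Posz 1; Negz 2; Negz 3; Negz 2; Negz 3; Negz 1; Negz 1; Negz 1; Negz 1; Negz 0; Negz 1; Negz 1; Negz 1; Negz 2; Negz 0; Negz 0; Negz 0];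
  [:: Posz 1; Posz 1; Negz 0; Posz 1; Posz 1; Posz 1; Negz 3; Negz 2; Negz 2; Negz 3; Negz 0; Negz 0; Negz 0; Negz 1; Negz 1; Negz 1; Negz 2; Negz 1; Negz 1; Negz 1; Negz 1; Negz 0];
  [:: Posz 1; Negz 0; Posz 1; Posz 1; Posz 1; Posz 1; Negz 3; Negz 2; Negz 3; Negz 2; Negz 1; Negz 1; Negz 0; Negz 1; Negz 1; Negz 1; Negz 0; Negz 0; Negz 0; Negz 1; Negz 1; Negz 2];
  [:: Posz 1; Posz 1; Posz 1; Negz 0; Posz 1; Posz 1; Negz 2; Negz 2; Negz 3; Negz 3; Negz 1; Negz 1; Negz 2; Negz 1; Negz 1; Negz 1; Negz 0; Negz 1; Negz 1; Negz 0; Negz 0; Negz 0];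
  [:: Posz 1; Posz 1; Posz 1; Posz 1; Posz 1; Negz 0; Negz 3; Negz 3; Negz 2; Negz 2; Negz 0; Negz 0; Negz 0; Negz 1; Negz 1; Negz 0; Negz 1; Negz 1; Negz 1; Negz 2; Negz 1; Negz 1];
  [:: Posz 1; Posz 1; Posz 1; Posz 1; Negz 0; Posz 1; Negz 2; Negz 3; Negz 2; Negz 3; Negz 2; Negz 1; Negz 1; Negz 0; Negz 0; Negz 0; Negz 1; Negz 1; Negz 1; Negz 0; Negz 1; Negz 1];
  [:: Posz 1; Posz 1; Negz 0; Posz 1; Posz 1; Posz 1; Negz 3; Negz 2; Negz 2; Negz 3; Negz 0; Negz 1; Negz 1; Negz 1; Negz 1; Negz 2; Negz 1; Negz 1; Negz 1; Negz 0; Negz 0; Negz 0];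
  [:: Posz 1; Negz 0; Posz 1; Posz 1; Posz 1; Posz 1; Negz 3; Negz 2; Negz 3; Negz 2; Negz 0; Negz 0; Negz 0; Negz 2; Negz 1; Negz 1; Negz 1; Negz 0; Negz 1; Negz 1; Negz 1; Negz 1];
  [:: Posz 1; Posz 1; Posz 1; Posz 1; Posz 1; Negz 0; Negz 3; Negz 3; Negz 2; Negz 2; Negz 1; Negz 0; Negz 1; Negz 0; Negz 0; Negz 0; Negz 1; Negz 2; Negz 1; Negz 1; Negz 1; Negz 1];
  [:: Negz 0; Posz 1; Posz 1; Posz 1; Posz 1; Posz 1; Negz 2; Negz 3; Negz 3; Negz 2; Negz 1; Negz 2; Negz 1; Negz 0; Negz 1; Negz 1; Negz 0; Negz 0; Negz 0; Negz 1; Negz 1; Negz 1];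
  [:: Posz 0; Posz 1; Posz 1; Posz 0; Posz 0; Posz 1; Negz 1; Negz 2; Negz 2; Negz 2; Negz 1; Negz 1; Negz 1; Negz 0; Negz 0; Negz 0; Negz 0; Negz 0; Negz 0; Negz 0; Negz 0; Negz 0];
  [:: Posz 1; Posz 0; Posz 0; Posz 0; Posz 1; Posz 1; Negz 2; Negz 1; Negz 2; Negz 2; Negz 0; Negz 0; Negz 0; Negz 1; Negz 1; Negz 1; Negz 0; Negz 0; Negz 0; Negz 0; Negz 0; Negz 0];
  [:: Posz 1; Posz 1; Posz 0; Posz 1; Posz 0; Posz 0; Negz 2; Negz 2; Negz 1; Negz 2; Negz 0; Negz 0; Negz 0; Negz 0; Negz 0; Negz 0; Negz 1; Negz 1; Negz 1; Negz 0; Negz 0; Negz 0];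
  [:: Posz 0; Posz 0; Posz 1; Posz 1; Posz 1; Posz 0; Negz 2; Negz 2; Negz 2; Negz 1; Negz 0; Negz 0; Negz 0; Negz 0; Negz 0; Negz 0; Negz 0; Negz 0; Negz 0; Negz 1; Negz 1; Negz 1];
  [:: Posz 0; Posz 1; Posz 0; Posz 1; Posz 1; Posz 0; Negz 2; Negz 2; Negz 1; Negz 1; Negz 0; Negz 0; Negz 0; Negz 0; Negz 0; Negz 0; Negz 1; Negz 1; Negz 0; Negz 1; Negz 1; Negz 0];
  [:: Posz 1; Posz 0; Posz 1; Posz 0; Posz 1; Posz 0; Negz 2; Negz 1; Negz 2; Negz 1; Negz 0; Negz 0; Negz 0; Negz 1; Negz 1; Negz 0; Negz 0; Negz 0; Negz 0; Negz 1; Negz 0; Negz 1];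
  [:: Posz 1; Posz 0; Posz 0; Posz 1; Posz 0; Posz 1; Negz 2; Negz 1; Negz 1; Negz 2; Negz 0; Negz 0; Negz 0; Negz 1; Negz 0; Negz 1; Negz 1; Negz 0; Negz 1; Negz 0; Negz 0; Negz 0];
  [:: Posz 0; Posz 0; Posz 1; Posz 1; Posz 0; Posz 1; Negz 1; Negz 2; Negz 2; Negz 1; Negz 1; Negz 1; Negz 0; Negz 0; Negz 0; Negz 0; Negz 0; Negz 0; Negz 0; Negz 0; Negz 1; Negz 1];
  [:: Posz 1; Posz 1; Posz 1; Posz 0; Posz 0; Posz 0; Negz 1; Negz 2; Negz 1; Negz 2; Negz 1; Negz 0; Negz 1; Negz 0; Negz 0; Negz 0; Negz 0; Negz 1; Negz 1; Negz 0; Negz 0; Negz 0];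
  [:: Posz 0; Posz 1; Posz 0; Posz 0; Posz 1; Posz 1; Negz 1; Negz 1; Negz 2; Negz 2; Negz 0; Negz 1; Negz 1; Negz 0; Negz 1; Negz 1; Negz 0; Negz 0; Negz 0; Negz 0; Negz 0; Negz 0]].

Definition thitab : seq (seq int) :=
  [:: [:: Negz 2; Negz 1; Negz 1; Negz 1; Negz 1; Negz 1; Negz 1; Negz 1; Negz 1; Negz 1; Negz 1; Negz 2; Posz 4; Posz 3; Posz 3; Posz 4; Posz 4; Posz 3; Posz 3; Posz 4; Posz 3; Posz 4];
  [:: Negz 1; Negz 1; Negz 1; Negz 1; Negz 2; Negz 1; Negz 1; Negz 1; Negz 1; Negz 2; Negz 1; Negz 1; Posz 3; Posz 4; Posz 3; Posz 4; Posz 3; Posz 4; Posz 4; Posz 4; Posz 3; Posz 3];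
  [:: Negz 1; Negz 1; Negz 1; Negz 2; Negz 1; Negz 1; Negz 1; Negz 1; Negz 2; Negz 1; Negz 1; Negz 1; Posz 3; Posz 4; Posz 4; Posz 3; Posz 4; Posz 3; Posz 4; Posz 3; Posz 3; Posz 4];
  [:: Negz 1; Negz 2; Negz 1; Negz 1; Negz 1; Negz 2; Negz 1; Negz 1; Negz 1; Negz 1; Negz 1; Negz 1; Posz 4; Posz 4; Posz 3; Posz 3; Posz 3; Posz 4; Posz 3; Posz 3; Posz 4; Posz 4];
  [:: Negz 1; Negz 1; Negz 2; Negz 1; Negz 1; Negz 1; Negz 1; Negz 2; Negz 1; Negz 1; Negz 1; Negz 1; Posz 4; Posz 3; Posz 4; Posz 3; Posz 3; Posz 3; Posz 4; Posz 4; Posz 4; Posz 3];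
  [:: Negz 1; Negz 1; Negz 1; Negz 1; Negz 1; Negz 1; Negz 2; Negz 1; Negz 1; Negz 1; Negz 2; Negz 1; Posz 3; Posz 3; Posz 4; Posz 4; Posz 4; Posz 4; Posz 3; Posz 3; Posz 4; Posz 3];
  [:: Posz 0; Posz 0; Posz 0; Posz 0; Posz 0; Negz 0; Posz 0; Negz 0; Posz 0; Posz 0; Posz 0; Negz 0; Posz 1; Posz 0; Posz 0; Posz 0; Posz 0; Posz 0; Posz 0; Posz 1; Posz 1; Posz 1];
  [:: Posz 0; Negz 0; Posz 0; Posz 0; Posz 0; Posz 0; Posz 0; Posz 0; Negz 0; Negz 0; Posz 0; Posz 0; Posz 0; Posz 1; Posz 0; Posz 0; Posz 0; Posz 1; Posz 1; Posz 0; Posz 0; Posz 1];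
  [:: Posz 0; Posz 0; Negz 0; Negz 0; Posz 0; Posz 0; Posz 0; Posz 0; Posz 0; Posz 0; Negz 0; Posz 0; Posz 0; Posz 0; Posz 1; Posz 0; Posz 1; Posz 0; Posz 1; Posz 0; Posz 1; Posz 0];
  [:: Negz 0; Posz 0; Posz 0; Posz 0; Negz 0; Posz 0; Negz 0; Posz 0; Posz 0; Posz 0; Posz 0; Posz 0; Posz 0; Posz 0; Posz 0; Posz 1; Posz 1; Posz 1; Posz 0; Posz 1; Posz 0; Posz 0];
  [:: Posz 0; Posz 0; Posz 0; Negz 0; Posz 0; Posz 0; Posz 0; Posz 0; Posz 0; Posz 0; Negz 0; Negz 0; Posz 0; Posz 0; Posz 1; Posz 1; Posz 1; Posz 0; Posz 0; Posz 0; Posz 0; Posz 1];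
  [:: Posz 0; Posz 0; Posz 0; Posz 0; Negz 0; Negz 0; Negz 0; Posz 0; Posz 0; Posz 0; Posz 0; Posz 0; Posz 0; Posz 1; Posz 0; Posz 1; Posz 0; Posz 1; Posz 0; Posz 0; Posz 1; Posz 0];
  [:: Posz 0; Posz 0; Posz 0; Posz 0; Posz 0; Posz 0; Posz 0; Negz 0; Negz 0; Negz 0; Posz 0; Posz 0; Posz 0; Posz 1; Posz 1; Posz 0; Posz 0; Posz 0; Posz 1; Posz 1; Posz 0; Posz 0];
  [:: Negz 0; Posz 0; Posz 0; Posz 0; Posz 0; Posz 0; Negz 0; Posz 0; Negz 0; Posz 0; Posz 0; Posz 0; Posz 0; Posz 0; Posz 1; Posz 1; Posz 1; Posz 0; Posz 0; Posz 0; Posz 0; Posz 1];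
  [:: Posz 0; Posz 0; Posz 0; Posz 0; Posz 0; Posz 0; Posz 0; Negz 0; Posz 0; Negz 0; Posz 0; Negz 0; Posz 1; Posz 0; Posz 0; Posz 1; Posz 0; Posz 0; Posz 1; Posz 1; Posz 0; Posz 0];
  [:: Posz 0; Negz 0; Negz 0; Posz 0; Posz 0; Posz 0; Posz 0; Posz 0; Posz 0; Posz 0; Negz 0; Posz 0; Posz 1; Posz 0; Posz 1; Posz 0; Posz 0; Posz 1; Posz 0; Posz 0; Posz 1; Posz 0];
  [:: Posz 0; Negz 0; Posz 0; Posz 0; Posz 0; Posz 0; Posz 0; Posz 0; Posz 0; Negz 0; Negz 0; Posz 0; Posz 0; Posz 1; Posz 0; Posz 1; Posz 0; Posz 1; Posz 0; Posz 0; Posz 1; Posz 0];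
  [:: Negz 0; Posz 0; Negz 0; Posz 0; Negz 0; Posz 0; Posz 0; Posz 0; Posz 0; Posz 0; Posz 0; Posz 0; Posz 1; Posz 0; Posz 0; Posz 1; Posz 0; Posz 0; Posz 1; Posz 1; Posz 0; Posz 0];
  [:: Posz 0; Posz 0; Posz 0; Negz 0; Posz 0; Negz 0; Posz 0; Posz 0; Posz 0; Posz 0; Posz 0; Negz 0; Posz 1; Posz 1; Posz 0; Posz 0; Posz 1; Posz 0; Posz 0; Posz 0; Posz 0; Posz 1];
  [:: Posz 0; Posz 0; Negz 0; Negz 0; Negz 0; Posz 0; Posz 0; Posz 0; Posz 0; Posz 0; Posz 0; Posz 0; Posz 0; Posz 1; Posz 1; Posz 0; Posz 0; Posz 0; Posz 1; Posz 1; Posz 0; Posz 0];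
  [:: Posz 0; Posz 0; Posz 0; Posz 0; Posz 0; Negz 0; Negz 0; Negz 0; Posz 0; Posz 0; Posz 0; Posz 0; Posz 1; Posz 0; Posz 1; Posz 0; Posz 0; Posz 1; Posz 0; Posz 0; Posz 1; Posz 0];
  [:: Negz 0; Negz 0; Posz 0; Posz 0; Posz 0; Posz 0; Posz 0; Posz 0; Negz 0; Posz 0; Posz 0; Posz 0; Posz 1; Posz 1; Posz 0; Posz 0; Posz 1; Posz 0; Posz 0; Posz 0; Posz 0; Posz 1]].

Definition Pmtab : seq (seq int) :=
  [:: [:: Posz 1; Posz 0; Posz 0; Posz 0; Posz 0; Posz 0; Posz 0; Posz 0; Posz 0; Posz 0; Posz 0; Posz 0; Posz 0; Posz 0; Posz 0; Posz 0];
  [:: Posz 0; Posz 1; Posz 0; Posz 0; Posz 0; Posz 0; Posz 0; Posz 0; Posz 0; Posz 0; Posz 0; Posz 0; Posz 0; Posz 0; Posz 0; Posz 0];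
  [:: Posz 0; Posz 0; Posz 1; Posz 0; Posz 0; Posz 0; Posz 0; Posz 0; Posz 0; Posz 0; Posz 0; Posz 0; Posz 0; Posz 0; Posz 0; Posz 0];
  [:: Posz 0; Posz 0; Posz 0; Posz 1; Posz 0; Posz 0; Posz 0; Posz 0; Posz 0; Posz 0; Posz 0; Posz 0; Posz 0; Posz 0; Posz 0; Posz 0];
  [:: Posz 1; Posz 0; Posz 0; Posz 0; Negz 0; Negz 0; Negz 0; Posz 1; Posz 0; Posz 0; Posz 1; Posz 0; Posz 0; Posz 1; Posz 0; Posz 0];
  [:: Posz 0; Posz 0; Posz 0; Posz 0; Posz 1; Posz 0; Posz 0; Posz 0; Posz 0; Posz 0; Posz 0; Posz 0; Posz 0; Posz 0; Posz 0; Posz 0];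
  [:: Posz 0; Posz 0; Posz 0; Posz 0; Posz 0; Posz 1; Posz 0; Posz 0; Posz 0; Posz 0; Posz 0; Posz 0; Posz 0; Posz 0; Posz 0; Posz 0];
  [:: Posz 0; Posz 0; Posz 0; Posz 0; Posz 0; Posz 0; Posz 1; Posz 0; Posz 0; Posz 0; Posz 0; Posz 0; Posz 0; Posz 0; Posz 0; Posz 0];
  [:: Posz 0; Posz 1; Posz 0; Posz 0; Posz 1; Posz 0; Posz 0; Negz 0; Negz 0; Negz 0; Posz 0; Posz 1; Posz 0; Posz 0; Posz 1; Posz 0];
  [:: Posz 0; Posz 0; Posz 0; Posz 0; Posz 0; Posz 0; Posz 0; Posz 1; Posz 0; Posz 0; Posz 0; Posz 0; Posz 0; Posz 0; Posz 0; Posz 0];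
  [:: Posz 0; Posz 0; Posz 0; Posz 0; Posz 0; Posz 0; Posz 0; Posz 0; Posz 1; Posz 0; Posz 0; Posz 0; Posz 0; Posz 0; Posz 0; Posz 0];
  [:: Posz 0; Posz 0; Posz 0; Posz 0; Posz 0; Posz 0; Posz 0; Posz 0; Posz 0; Posz 1; Posz 0; Posz 0; Posz 0; Posz 0; Posz 0; Posz 0];
  [:: Posz 0; Posz 0; Posz 1; Posz 0; Posz 0; Posz 1; Posz 0; Posz 0; Posz 1; Posz 0; Negz 0; Negz 0; Negz 0; Posz 0; Posz 0; Posz 1];
  [:: Posz 0; Posz 0; Posz 0; Posz 0; Posz 0; Posz 0; Posz 0; Posz 0; Posz 0; Posz 0; Posz 1; Posz 0; Posz 0; Posz 0; Posz 0; Posz 0];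
  [:: Posz 0; Posz 0; Posz 0; Posz 0; Posz 0; Posz 0; Posz 0; Posz 0; Posz 0; Posz 0; Posz 0; Posz 1; Posz 0; Posz 0; Posz 0; Posz 0];
  [:: Posz 0; Posz 0; Posz 0; Posz 0; Posz 0; Posz 0; Posz 0; Posz 0; Posz 0; Posz 0; Posz 0; Posz 0; Posz 1; Posz 0; Posz 0; Posz 0];
  [:: Posz 0; Posz 0; Posz 0; Posz 1; Posz 0; Posz 0; Posz 1; Posz 0; Posz 0; Posz 1; Posz 0; Posz 0; Posz 1; Negz 0; Negz 0; Negz 0];
  [:: Posz 0; Posz 0; Posz 0; Posz 0; Posz 0; Posz 0; Posz 0; Posz 0; Posz 0; Posz 0; Posz 0; Posz 0; Posz 0; Posz 1; Posz 0; Posz 0];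
  [:: Posz 0; Posz 0; Posz 0; Posz 0; Posz 0; Posz 0; Posz 0; Posz 0; Posz 0; Posz 0; Posz 0; Posz 0; Posz 0; Posz 0; Posz 1; Posz 0];
  [:: Posz 0; Posz 0; Posz 0; Posz 0; Posz 0; Posz 0; Posz 0; Posz 0; Posz 0; Posz 0; Posz 0; Posz 0; Posz 0; Posz 0; Posz 0; Posz 1]].

Definition imtab : seq (seq int) :=
  [:: [:: Negz 0; Posz 0; Posz 0; Posz 0; Posz 1; Posz 1; Posz 1; Posz 1; Posz 0; Negz 0; Posz 0; Posz 0; Posz 0; Negz 0; Posz 0; Posz 0; Posz 0; Negz 0; Posz 0; Posz 0];
  [:: Posz 0; Negz 0; Posz 0; Posz 0; Posz 0; Negz 0; Posz 0; Posz 0; Posz 1; Posz 1; Posz 1; Posz 1; Posz 0; Posz 0; Negz 0; Posz 0; Posz 0; Posz 0; Negz 0; Posz 0];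
  [:: Posz 0; Posz 0; Negz 0; Posz 0; Posz 0; Posz 0; Negz 0; Posz 0; Posz 0; Posz 0; Negz 0; Posz 0; Posz 1; Posz 1; Posz 1; Posz 1; Posz 0; Posz 0; Posz 0; Negz 0];
  [:: Posz 0; Posz 0; Posz 0; Negz 0; Posz 0; Posz 0; Posz 0; Negz 0; Posz 0; Posz 0; Posz 0; Negz 0; Posz 0; Posz 0; Posz 0; Negz 0; Posz 1; Posz 1; Posz 1; Posz 1]].

Definition Rmtab : seq (seq int) :=
  [:: [:: Posz 0; Posz 0; Posz 0; Posz 0];
  [:: Posz 0; Posz 0; Posz 0; Posz 0];
  [:: Posz 0; Posz 0; Posz 0; Posz 0];
  [:: Posz 0; Posz 0; Posz 0; Posz 0];
  [:: Posz 1; Posz 0; Posz 0; Posz 0];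
  [:: Posz 0; Posz 0; Posz 0; Posz 0];
  [:: Posz 0; Posz 0; Posz 0; Posz 0];
  [:: Posz 0; Posz 0; Posz 0; Posz 0];
  [:: Posz 0; Posz 1; Posz 0; Posz 0];
  [:: Posz 0; Posz 0; Posz 0; Posz 0];
  [:: Posz 0; Posz 0; Posz 0; Posz 0];
  [:: Posz 0; Posz 0; Posz 0; Posz 0];
  [:: Posz 0; Posz 0; Posz 1; Posz 0];
  [:: Posz 0; Posz 0; Posz 0; Posz 0];
  [:: Posz 0; Posz 0; Posz 0; Posz 0];
  [:: Posz 0; Posz 0; Posz 0; Posz 0];
  [:: Posz 0; Posz 0; Posz 0; Posz 1];
  [:: Posz 0; Posz 0; Posz 0; Posz 0];
  [:: Posz 0; Posz 0; Posz 0; Posz 0];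
  [:: Posz 0; Posz 0; Posz 0; Posz 0]].

Lemma sumz_big p (F : nat -> int) : \sum_(k < p) F k = sumz [seq F k | k <- iota 0 p].
Proof.
rewrite -(big_mkord xpredT F) /index_iota subn0.
by elim: (iota 0 p) => [|a s IH]; rewrite ?big_nil ?big_cons //= IH.
Qed.

Lemma mulcheckP n p m (f g h : nat -> nat -> int) : mulcheck n p m f g h ->
  \matrix_(i < n, j < p) f i j *m \matrix_(i < p, j < m) g i j = \matrix_(i < n, j < m) h i j.
Proof.
move=> /allP chk; apply/matrixP=> i j; rewrite !mxE.
rewrite (eq_bigr (fun k : 'I_p => f i k * g k j)); last by move=> k _; rewrite !mxE.
rewrite (sumz_big p (fun k => f i k * g k j)).
have Hi : (i : nat) \in iota 0 n by rewrite mem_iota ltn_ord.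
have Hj : (j : nat) \in iota 0 m by rewrite mem_iota ltn_ord.
by move: (chk _ Hi) => /allP /(_ _ Hj) /eqP.
Qed.

Definition eqcheck n m (f h : nat -> nat -> int) : bool :=
  all (fun i => all (fun j => f i j == h i j) (iota 0 m)) (iota 0 n).

Lemma eqcheckP n m (f h : nat -> nat -> int) : eqcheck n m f h ->
  \matrix_(i < n, j < m) f i j = \matrix_(i < n, j < m) h i j.
Proof.
move=> /allP chk; apply/matrixP=> i j; rewrite !mxE.
have Hi : (i : nat) \in iota 0 n by rewrite mem_iota ltn_ord.
have Hj : (j : nat) \in iota 0 m by rewrite mem_iota ltn_ord.
by move: (chk _ Hi) => /allP /(_ _ Hj) /eqP.
Qed.

Definition idf (i j : nat) : int := (i == j)%:R.

Lemma idfE n : \matrix_(i < n, j < n) idf i j = 1%:M.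
Proof. by apply/matrixP=> i j; rewrite !mxE /idf. Qed.

Definition zf (i j : nat) : int := 0.
Lemma zfE n m : \matrix_(i < n, j < m) zf i j = 0.
Proof. by apply/matrixP=> i j; rewrite !mxE. Qed.

Definition blockf (n1 m1 : nat) (f1 f2 : nat -> nat -> int) (i j : nat) : int :=
  if (i < n1)%N then (if (j < m1)%N then f1 i j else 0)
  else (if (j < m1)%N then 0 else f2 (i - n1)%N (j - m1)%N).

Lemma blockfE n1 n2 m1 m2 (f1 f2 : nat -> nat -> int) :
  block_mx (\matrix_(i < n1, j < m1) f1 i j) 0 0 (\matrix_(i < n2, j < m2) f2 i j)
  = \matrix_(i < n1 + n2, j < m1 + m2) blockf n1 m1 f1 f2 i j.
Proof.
apply/matrixP=> i j; rewrite -(splitK i) -(splitK j).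
case: (split i) => i'; case: (split j) => j'; rewrite /unsplit.
- by rewrite block_mxEul !mxE /blockf /= !ltn_ord.
- by rewrite block_mxEur !mxE /blockf /= ltn_ord ltnNge leq_addr.
- by rewrite block_mxEdl !mxE /blockf /= ltn_ord ltnNge leq_addr.
- by rewrite block_mxEdr !mxE /blockf /= !ltnNge !leq_addr /= !addKn.
Qed.

End Part2.

Section Part3.
Import GRing.Theory.
Local Open Scope ring_scope.
Local Open Scope group_scope.

Definition par_mul_chk : bool :=
  all (fun L1 => all (fun L2 => par (lcomp L1 L2) == par L1 (+) par L2) All120) All120.
Lemma par_mul_ok : par_mul_chk. Proof. by vm_compute. Qed.
Definition lcomp_id_chk : bool := all (fun L => lcomp L id5 == L) All120.
Lemma lcomp_id_ok : lcomp_id_chk. Proof. by vm_compute. Qed.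
Definition linv_chk : bool :=
  all (fun L => all (fun M => (lcomp L M == id5) ==> (M == linv L)) A5list) A5list.
Lemma linv_ok : linv_chk. Proof. by vm_compute. Qed.
Lemma size_A5list : size A5list = 60%N. Proof. by vm_compute. Qed.
Lemma uniq_A5list : uniq A5list. Proof. by vm_compute. Qed.
Lemma par_id5 : par id5 = false. Proof. by vm_compute. Qed.
Lemma A5_All120 L : L \in A5list -> L \in All120.
Proof. by rewrite mem_filter => /andP[]. Qed.

Section Act.
Variables (gT : finGroupType) (G H : {group gT}).
Hypotheses (sHG : H \subset G) (cardG : #|G| = 60%N) (cardH : #|H| = 12%N)
  (simG : simple G).

Definition Lg (g : gT) : seq nat :=
  [seq index (nth set0 (coset_seq G H) k :* g) (coset_seq G H) | k <- iota 0 5].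

Local Notation cs := (coset_seq G H).

Lemma uniq_cs : uniq cs. Proof. exact: enum_uniq. Qed.
Lemma size_cs : size cs = 5%N.
Proof.
rewrite /coset_seq -cardE -/(indexg G H).
have := Lagrange sHG; rewrite cardG cardH.
by move=> /eqP; rewrite -[60%N]/(12 * 5)%N eqn_pmul2l // => /eqP.
Qed.
Lemma mem_cs C : (C \in cs) = (C \in rcosets H G).
Proof. exact: mem_enum. Qed.

Lemma rcs_mul C g : C \in rcosets H G -> g \in G -> C :* g \in rcosets H G.
Proof.
case/rcosetsP=> x Gx ->{C} Gg; apply/rcosetsP; exists (x * g); first exact: groupM.
by rewrite rcosetM.
Qed.

Lemma nth_cs k : (k < 5)%N -> nth set0 cs k \in rcosets H G.
Proof. by move=> k5; rewrite -mem_cs mem_nth ?size_cs. Qed.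

Lemma apLg k g : (k < 5)%N -> ap (Lg g) k = index (nth set0 cs k :* g) cs.
Proof. by move=> k5; rewrite /ap /Lg (nth_map 0%N) ?size_iota // nth_iota. Qed.

Lemma apLg_lt k g : (k < 5)%N -> g \in G -> (ap (Lg g) k < 5)%N.
Proof.
by move=> k5 Gg; rewrite apLg // -size_cs index_mem mem_cs rcs_mul ?nth_cs.
Qed.

Lemma Lg_nth k g : (k < 5)%N -> g \in G ->
  nth set0 cs (ap (Lg g) k) = nth set0 cs k :* g.
Proof.
by move=> k5 Gg; rewrite apLg // nth_index // mem_cs rcs_mul ?nth_cs.
Qed.

Lemma nth_cs_inj i j : (i < 5)%N -> (j < 5)%N -> (nth set0 cs i == nth set0 cs j) = (i == j).
Proof. by move=> i5 j5; rewrite nth_uniq ?size_cs ?uniq_cs. Qed.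

Lemma Lg_mul g h : g \in G -> h \in G -> Lg (g * h) = lcomp (Lg g) (Lg h).
Proof.
move=> Gg Gh; rewrite [Lg (g * h)]/Lg /lcomp; apply/eq_in_map => k; rewrite mem_iota add0n => /andP[_ k5].
rewrite apLg ?apLg_lt // Lg_nth //.
by rewrite rcosetM.
Qed.

Lemma Lg1 : Lg 1 = id5.
Proof.
rewrite /Lg /id5 -{2}(map_id (iota 0 5)); apply/eq_in_map => k.
rewrite mem_iota add0n => /andP[_ k5].
by rewrite rcoset1 index_uniq ?size_cs ?uniq_cs.
Qed.

Lemma pmat_Lg g i j : g \in G -> (i < 5)%N -> (j < 5)%N ->
  pmat_nat G H g i j = (ap (Lg g) i == j)%:Z.
Proof.
move=> Gg i5 j5; rewrite /pmat_nat -Lg_nth // nth_cs_inj ?apLg_lt //.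
Qed.

Lemma uniq_Lg g : g \in G -> uniq (Lg g).
Proof.
move=> Gg; rewrite map_inj_in_uniq ?iota_uniq // => i j.
rewrite !mem_iota !add0n => /andP[_ i5] /andP[_ j5] E.
have: nth set0 cs i :* g = nth set0 cs j :* g.
  by rewrite -!Lg_nth // !apLg // E.
move/(congr1 (fun A => A :* g^-1)); rewrite !rcosetK => /eqP.
by rewrite nth_cs_inj // => /eqP.
Qed.

Lemma Lg_All120 g : g \in G -> Lg g \in All120.
Proof.
move=> Gg; rewrite mem_permutations.
have sub : {subset Lg g <= id5}.
  move=> x /mapP[k]; rewrite mem_iota add0n => /andP[_ k5] ->.
  by rewrite mem_iota add0n /= -(@apLg k g k5) apLg_lt.
have sz : (size id5 <= size (Lg g))%N by rewrite size_map.
have [_ eqs] := uniq_min_size (uniq_Lg Gg) sub sz.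
by apply: uniq_perm; rewrite ?uniq_Lg ?iota_uniq.
Qed.

Lemma par_Lg_mul g h : g \in G -> h \in G -> par (Lg (g * h)) = par (Lg g) (+) par (Lg h).
Proof.
move=> Gg Gh; rewrite Lg_mul //.
have := par_mul_ok; move=> /allP /(_ _ (Lg_All120 Gg)) /allP /(_ _ (Lg_All120 Gh)).
by move/eqP.
Qed.

Lemma par_Lg_inv g : g \in G -> par (Lg g^-1) = par (Lg g).
Proof.
move=> Gg; have := par_Lg_mul Gg (groupVr Gg); rewrite mulgV Lg1 par_id5.
by case: (par (Lg g)); case: (par (Lg g^-1)).
Qed.

Definition Nset := [set g in G | ~~ par (Lg g)].
Lemma Nset_group : group_set Nset.
Proof.
apply/group_setP; split; first by rewrite inE group1 Lg1 par_id5.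
move=> x y; rewrite !inE => /andP[Gx px] /andP[Gy py].
by rewrite groupM // par_Lg_mul // (negbTE px) (negbTE py).
Qed.
Canonical Ngroup := Group Nset_group.

Lemma conj_sub (A : {set gT}) (P : gT -> bool) :
  A \subset G -> (forall x y, x \in G -> y \in A -> y ^ x \in A) -> A <| G.
Proof.
move=> sAG cl; apply/normalP; split=> // x Gx.
apply/eqP; rewrite eqEcard cardJg leqnn andbT; apply/subsetP=> y.
rewrite mem_conjg => Ay.
by have := cl x _ Gx Ay; rewrite conjgKV.
Qed.

Lemma Nnormal : Ngroup <| G.
Proof.
apply: (@conj_sub _ xpredT); first by apply/subsetP=> x; rewrite inE => /andP[].
move=> x y Gx; rewrite !inE => /andP[Gy py].
rewrite groupJ // conjgE !par_Lg_mul ?groupM ?groupV // par_Lg_inv //.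
by move: py; case: (par (Lg x)); case: (par (Lg y)).
Qed.

Lemma N_all : forall g, g \in G -> ~~ par (Lg g).
Proof.
have [ntG simp] := simpleP _ simG.
case: (simp _ Nnormal) => [N1|NG]; last first.
  by move=> g Gg; have := Gg; rewrite -NG inE => /andP[].
exfalso.
case: (pickP [pred g in G | par (Lg g)]) => [g0 /andP[Gg0 pg0]|none]; last first.
  have : G \subset Ngroup.
    by apply/subsetP=> g Gg; rewrite inE Gg /=; have := none g; rewrite /= Gg /= => ->.
  by rewrite N1 => /subset_leq_card; rewrite cards1 cardG.
have : G \subset [set 1; g0].
  apply/subsetP=> g Gg; rewrite !inE.
  case pg: (par (Lg g)).
    have : g * g0^-1 \in Ngroup.
      by rewrite inE groupM ?groupV //= par_Lg_mul ?groupV // par_Lg_inv // pg pg0.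
    by rewrite N1 inE -eq_mulgV1 => ->; rewrite orbT.
  have : g \in Ngroup by rewrite inE Gg pg.
  by rewrite N1 inE => ->.
move=> /subset_leq_card; rewrite cardG cards2.
by case: (1 != g0).
Qed.

Lemma Lg_A5 g : g \in G -> Lg g \in A5list.
Proof. by move=> Gg; rewrite mem_filter N_all // Lg_All120. Qed.

Definition Kset := [set g in G | Lg g == id5].
Lemma Kset_group : group_set Kset.
Proof.
apply/group_setP; split; first by rewrite inE group1 Lg1 eqxx.
move=> x y; rewrite !inE => /andP[Gx /eqP px] /andP[Gy /eqP py].
rewrite groupM // Lg_mul // px py.
by have := lcomp_id_ok => /allP /(_ _ (@Lg_All120 1 (group1 G))); rewrite Lg1.
Qed.
Canonical Kgroup := Group Kset_group.

Lemma lcomp_id L : L \in A5list -> lcomp L id5 = L.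
Proof. by move=> /A5_All120 HL; have /allP /(_ _ HL) /eqP := lcomp_id_ok. Qed.

Definition lcomp_idl_chk : bool := all (fun L => lcomp id5 L == L) A5list.
Lemma lcomp_idl_ok : lcomp_idl_chk. Proof. by vm_compute. Qed.
Lemma lcomp_idl L : L \in A5list -> lcomp id5 L = L.
Proof. by move=> HL; have /allP /(_ _ HL) /eqP := lcomp_idl_ok. Qed.

Lemma Knormal : Kgroup <| G.
Proof.
apply: (@conj_sub _ xpredT); first by apply/subsetP=> x; rewrite inE => /andP[].
move=> x y Gx; rewrite !inE => /andP[Gy /eqP py].
rewrite groupJ // conjgE !Lg_mul ?groupM ?groupV // py lcomp_idl ?Lg_A5 //.
by rewrite -Lg_mul ?groupV // mulVg Lg1.
Qed.

Lemma Lg_inj g h : g \in G -> h \in G -> Lg g = Lg h -> g = h.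
Proof.
move=> Gg Gh eqL.
have [ntG simp] := simpleP _ simG.
have K1 : Kgroup :=: 1.
  case: (simp _ Knormal) => // KG; exfalso.
  have [x0 Gx0 e0] : exists2 x, x \in G & nth set0 cs 0 = H :* x.
    by apply/rcosetsP; apply: nth_cs.
  have [x1 Gx1 e1] : exists2 x, x \in G & nth set0 cs 1 = H :* x.
    by apply/rcosetsP; apply: nth_cs.
  have Gg0 : x0^-1 * x1 \in G by rewrite groupM ?groupV.
  have : x0^-1 * x1 \in Kgroup by rewrite KG.
  rewrite inE Gg0 /= => /eqP/(congr1 (fun L => ap L 0)).
  rewrite apLg // e0 rcosetM rcosetK -e1 index_uniq ?size_cs ?uniq_cs //.
have : g * h^-1 \in Kgroup.
  rewrite inE groupM ?groupV //= Lg_mul ?groupV // eqL -Lg_mul ?groupV //.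
  by rewrite mulgV Lg1.
by rewrite K1 inE -eq_mulgV1 => /eqP.
Qed.

Lemma Lg_surj L : L \in A5list -> exists2 g, g \in G & Lg g = L.
Proof.
move=> HL.
have U : uniq (map Lg (enum G)).
  rewrite map_inj_in_uniq ?enum_uniq // => x y; rewrite !mem_enum; exact: Lg_inj.
have S : {subset map Lg (enum G) <= A5list}.
  by move=> L' /mapP[x]; rewrite mem_enum => Gx ->; exact: Lg_A5.
have sz : (size A5list <= size (map Lg (enum G)))%N.
  by rewrite size_map -cardE cardG size_A5list.
have [_ eqs] := uniq_min_size U S sz.
by have := HL; rewrite -eqs => /mapP[x]; rewrite mem_enum => Gx ->; exists x.
Qed.

Lemma Lg_inv g : g \in G -> Lg g^-1 = linv (Lg g).
Proof.
move=> Gg.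
have := linv_ok => /allP /(_ _ (Lg_A5 Gg)) /allP /(_ _ (Lg_A5 (groupVr Gg))).
by rewrite -Lg_mul ?groupV // mulgV Lg1 eqxx /= => /eqP.
Qed.

End Act.

End Part3.

Section Part4.
Import GRing.Theory.
Local Open Scope ring_scope.
Local Open Scope group_scope.

Lemma sum_nth (T : eqType) (s : seq T) (x0 y : T) (F : 'I_(size s) -> int) :
  uniq s -> y \in s ->
  exists2 k : 'I_(size s), nth x0 s k = y &
    \sum_(k < size s) (y == nth x0 s k)%:Z * F k = F k.
Proof.
move=> us ys.
have kl : (index y s < size s)%N by rewrite index_mem.
exists (Ordinal kl); first exact: nth_index.
rewrite (bigD1 (Ordinal kl)) //= nth_index // eqxx mul1r big1 ?addr0 // => k nk.
suff -> : (y == nth x0 s k) = false by rewrite mul0r.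
apply/negbTE; rewrite -{1}(nth_index x0 ys) nth_uniq //.
by apply: contra nk => /eqP e; apply/eqP/val_inj.
Qed.

Lemma nth_eq_uniq (T : eqType) (s : seq T) x0 (i j : 'I_(size s)) :
  uniq s -> (nth x0 s i == nth x0 s j) = (i == j).
Proof. by move=> us; rewrite nth_uniq. Qed.

Definition goodb (xs : seq (seq nat)) (act : seq nat -> seq nat -> seq nat) : bool :=
  [&& uniq xs, all (fun x => all (fun L => act x L \in xs) A5list) xs,
   all (fun x => act x id5 == x) xs,
   all (fun x => all (fun L1 => all (fun L2 =>
       act (act x L1) L2 == act x (lcomp L1 L2)) A5list) A5list) xs &
   all (fun x => all (fun y => has (fun L => act x L == y) A5list) xs) xs].

Section Alat.
Variables (gT : finGroupType) (G H : {group gT}).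
Hypotheses (sHG : H \subset G) (cardG : #|G| = 60%N) (cardH : #|H| = 12%N)
  (simG : simple G).
Local Notation Lg := (Lg G H).
Variables (xs : seq (seq nat)) (act : seq nat -> seq nat -> seq nat).
Hypothesis good : goodb xs act.

Definition alat : lattice gT := @Lattice gT (size xs)
  (fun g => \matrix_(i, j) (act (nth [::] xs i) (Lg g) == nth [::] xs j)%:Z).

Lemma uxs : uniq xs. Proof. by case/and5P: good. Qed.
Lemma actg_in x g : x \in xs -> g \in G -> act x (Lg g) \in xs.
Proof.
case/and5P: good => _ /allP h _ _ _ xin Gg.
by have /allP := h x xin; apply; apply: Lg_A5.
Qed.
Lemma actg_mul x g h : x \in xs -> g \in G -> h \in G ->
  act (act x (Lg g)) (Lg h) = act x (Lg (g * h)).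
Proof.
case/and5P: good => _ _ _ /allP hh _ xin Gg Gh.
have /allP /(_ _ (Lg_A5 sHG cardG cardH simG Gg)) /allP := hh x xin.
move=> /(_ _ (Lg_A5 sHG cardG cardH simG Gh)) /eqP ->.
by rewrite Lg_mul.
Qed.
Lemma actg_1 x : x \in xs -> act x (Lg 1) = x.
Proof.
case/and5P: good => _ _ /allP h _ _ xin.
by rewrite Lg1 //; apply/eqP/h.
Qed.
Lemma actg_trans x y : x \in xs -> y \in xs -> exists2 g, g \in G & act x (Lg g) = y.
Proof.
case/and5P: good => _ _ _ _ /allP h xin yin.
have /allP /(_ _ yin) /hasP [L LA /eqP e] := h x xin.
have [g Gg eL] := Lg_surj sHG cardG cardH simG LA.
by exists g; rewrite ?eL.
Qed.

Lemma alat_glat : is_Glattice G alat.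
Proof.
split.
  apply/matrixP=> i j; rewrite /= !mxE actg_1 ?mem_nth //.
  by rewrite nth_eq_uniq ?uxs // natz.
move=> g h Gg Gh; apply/matrixP=> i j; rewrite /= !mxE.
under eq_bigr do rewrite !mxE.
have yin : act (nth [::] xs i) (Lg g) \in xs by rewrite actg_in ?mem_nth.
have [k ek ->] := sum_nth [::]
   (fun k => (act (nth [::] xs k) (Lg h) == nth [::] xs j)%:Z) uxs yin.
by rewrite ek actg_mul ?mem_nth.
Qed.

Lemma alat_transport (K : {group gT}) x0 : K \subset G -> x0 \in xs ->
  (forall g, g \in G -> (act x0 (Lg g) == x0) = (g \in K)) ->
  lat_iso G (Zperm G K) alat.
Proof.
move=> sKG x0in stab.
pose csK := coset_seq G K.
have ucs : uniq csK by exact: enum_uniq.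
pose psi (C : {set gT}) := act x0 (Lg (repr C)).
have psiE x : x \in G -> psi (K :* x) = act x0 (Lg x).
  move=> Gx; rewrite /psi.
  have /rcosetP [k Kk ->] := mem_repr_rcoset K x.
  have Gk := subsetP sKG k Kk.
  rewrite -actg_mul //.
  by have /eqP -> : act x0 (Lg k) == x0 by rewrite stab.
have csP (i : nat) : (i < size csK)%N -> exists2 x, x \in G & nth set0 csK i = K :* x.
  by move=> il; apply/rcosetsP; rewrite -mem_enum mem_nth.
have psi_in (i : nat) : (i < size csK)%N -> psi (nth set0 csK i) \in xs.
  by move=> /csP [x Gx ->]; rewrite psiE // actg_in.
have psi_inj (i i' : 'I_(size csK)) : psi (nth set0 csK i) = psi (nth set0 csK i') -> i = i'.
  have [x Gx ex] := csP i (ltn_ord i); have [x' Gx' ex'] := csP i' (ltn_ord i').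
  rewrite ex ex' !psiE // => /(congr1 (fun y => act y (Lg x'^-1))).
  rewrite !actg_mul ?groupV // mulgV actg_1 // => /eqP.
  rewrite stab; last by rewrite groupM ?groupV.
  rewrite -mem_rcoset => /rcoset_eqP e.
  by apply/eqP; rewrite -(nth_eq_uniq set0 _ _ ucs) ex ex' e.
have psi_surj y : y \in xs -> exists i : 'I_(size csK), psi (nth set0 csK i) = y.
  move=> yin; have [g Gg eg] := actg_trans x0in yin.
  have Kg : K :* g \in csK by rewrite mem_enum; apply/rcosetsP; exists g.
  have il : (index (K :* g) csK < size csK)%N by rewrite index_mem.
  by exists (Ordinal il); rewrite /= nth_index // psiE.
have psi_mul (i : nat) g : (i < size csK)%N -> g \in G ->
    (nth set0 csK i :* g \in csK) /\
    psi (nth set0 csK i :* g) = act (psi (nth set0 csK i)) (Lg g).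
  move=> /csP [x Gx ->] Gg; rewrite -rcosetM mem_enum; split.
    by apply/rcosetsP; exists (x * g); rewrite ?groupM.
  by rewrite !psiE ?groupM // actg_mul.
pose f := \matrix_(i < size csK, j < size xs) (psi (nth set0 csK i) == nth [::] xs j)%:Z.
exists f, f^T; split.
- apply/matrixP=> i i'; rewrite !mxE.
  under eq_bigr do rewrite !mxE.
  have [k ek ->] := sum_nth [::] (fun j => (psi (nth set0 csK i') == nth [::] xs j)%:Z)
    uxs (psi_in _ (ltn_ord i)).
  rewrite ek natz.
  suff -> : (psi (nth set0 csK i') == psi (nth set0 csK i)) = (i == i') by [].
  by apply/eqP/eqP => [e|->//]; rewrite (psi_inj _ _ e).
- apply/matrixP=> j j'; rewrite !mxE.
  under eq_bigr do rewrite !mxE.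
  have [i0 e0] := psi_surj _ (mem_nth [::] (ltn_ord j)).
  rewrite (bigD1 i0) //= big1 ?addr0.
    by rewrite e0 eqxx mul1r nth_eq_uniq ?uxs // natz.
  move=> i ni; suff -> : (psi (nth set0 csK i) == nth [::] xs j) = false by rewrite mul0r.
  by apply/negbTE; apply: contra ni => /eqP e; apply/eqP/psi_inj; rewrite e e0.
- move=> g Gg; apply/matrixP=> i j; rewrite !mxE.
  under eq_bigr do rewrite !mxE.
  under [in RHS]eq_bigr do rewrite !mxE.
  have [inK pm] := psi_mul i g (ltn_ord i) Gg.
  have [k ek ->] := sum_nth set0
    (fun k => (psi (nth set0 csK k) == nth [::] xs j)%:Z) ucs inK.
  have [k' ek' ->] := sum_nth [::]
    (fun k => (act (nth [::] xs k) (Lg g) == nth [::] xs j)%:Z) uxs (psi_in _ (ltn_ord i)).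
  by rewrite /= ek ek' pm.
Qed.

End Alat.

End Part4.

Section Part5.
Import GRing.Theory Num.Theory.
Local Open Scope ring_scope.
Local Open Scope group_scope.

Section AlatFlabby.
Variables (gT : finGroupType) (G H : {group gT}).
Hypotheses (sHG : H \subset G) (cardG : #|G| = 60%N) (cardH : #|H| = 12%N)
  (simG : simple G).
Local Notation Lg := (Lg G H).
Variables (xs : seq (seq nat)) (act : seq nat -> seq nat -> seq nat).
Hypothesis good : goodb xs act.
Local Notation n := (size xs).
Let actg_in' := actg_in sHG cardG cardH simG good.
Let actg_mul' := actg_mul sHG cardG cardH simG good.
Let actg_1' := actg_1 sHG cardG cardH good.

Lemma alat_flabby : flabby G (alat G H xs act).
Proof.
move=> H' sH x Hx.
have uxs := uxs good.
have sHG' h : h \in H' -> h \in G := subsetP sH h.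
pose a (i : 'I_n) (h : gT) : 'I_n := insubd i (index (act (nth [::] xs i) (Lg h)) xs).
have aE i h : h \in G -> nth [::] xs (a i h) = act (nth [::] xs i) (Lg h).
  move=> Gh; have yin := actg_in' (mem_nth [::] (ltn_ord i)) Gh.
  by rewrite val_insubd index_mem yin nth_index.
have a_inj i j h : h \in G -> (a i h == a j h) = (i == j).
  move=> Gh; rewrite -(nth_eq_uniq [::] _ _ uxs) !aE //.
  apply/eqP/eqP => [e|->//].
  have := congr1 (fun y => act y (Lg h^-1)) e.
  rewrite !actg_mul' ?mem_nth ?groupV // mulgV.
  by rewrite !actg_1' ?mem_nth // => /eqP; rewrite nth_eq_uniq // => /eqP.
have repE h i j : h \in G -> rep (alat G H xs act) h i j = (a i h == j)%:Z.
  by move=> Gh; rewrite /= mxE -aE // nth_eq_uniq.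
have a1 i : a i 1 = i.
  by apply/eqP; rewrite -(nth_eq_uniq [::] _ _ uxs) aE // actg_1' ?mem_nth.
have aM i g h : g \in G -> h \in G -> a (a i g) h = a i (g * h).
  move=> Gg Gh; apply/eqP; rewrite -(nth_eq_uniq [::] _ _ uxs) !aE ?groupM //.
  by rewrite actg_mul' ?mem_nth.
pose orb (i : 'I_n) := [set j | [exists h in H', a i h == j]].
have orb_refl i : i \in orb i.
  by rewrite inE; apply/existsP; exists 1; rewrite group1 a1 eqxx.
have orb_eq i j : j \in orb i -> orb j = orb i.
  rewrite inE => /existsP [h0 /andP [Hh0 /eqP <-]].
  apply/setP=> k; rewrite !inE; apply/existsP/existsP => [[h /andP [Hh /eqP <-]]|[h /andP [Hh /eqP <-]]].
    by exists (h0 * h); rewrite groupM ?aM ?sHG' //=.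
  exists (h0^-1 * h); rewrite groupM ?groupV //= aM ?sHG' ?groupM ?groupV //.
  by rewrite mulgA mulgV mul1g.
have a_orb i h j : h \in H' -> (a i h \in orb j) = (i \in orb j).
  move=> Hh; apply/idP/idP => [ain | iin].
    rewrite -(orb_eq _ _ ain).
    rewrite inE; apply/existsP; exists h^-1; rewrite groupV Hh /=.
    by rewrite aM ?sHG' ?groupV // mulgV a1.
  rewrite -(orb_eq _ _ iin) inE; apply/existsP; exists h; rewrite Hh /=.
  by [].
have zs j0 : \sum_(i in orb j0) x 0 i = 0.
  have E k : \sum_(h in H') \sum_(i < n) x 0 i * (a i h == k)%:Z = 0.
    transitivity ((x *m \sum_(h in H') rep (alat G H xs act) h) 0 k); last by rewrite Hx mxE.
    rewrite mulmx_sumr summxE.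
    apply: eq_bigr => h Hh; rewrite mxE; apply: eq_bigr => i _.
    by rewrite repE ?sHG'.
  have inner h i : h \in H' ->
      \sum_(k in orb j0) x 0 i * (a i h == k)%:Z = if i \in orb j0 then x 0 i else 0.
    move=> Hh; rewrite -mulr_sumr -(a_orb i h j0 Hh).
    case: (boolP (a i h \in orb j0)) => ain.
      rewrite (bigD1 (a i h)) //= eqxx big1 ?addr0 ?mulr1 // => k /andP [_ nk].
      by rewrite eq_sym (negbTE nk).
    by rewrite big1 ?mulr0 // => k kin; case: eqP => // e; move: ain; rewrite e kin.
  have : \sum_(k in orb j0) \sum_(h in H') \sum_(i < n) x 0 i * (a i h == k)%:Z = 0.
    by rewrite big1 // => k _; rewrite E.
  rewrite exchange_big /= (eq_bigr (fun h => \sum_(i in orb j0) x 0 i)); last first.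
    move=> h Hh; rewrite exchange_big /= [RHS]big_mkcond /=; apply: eq_bigr => i _; exact: inner.
  rewrite sumr_const => /eqP; rewrite mulrn_eq0 => /orP [|/eqP //].
  by rewrite cards_eq0 => /eqP /setP /(_ 1); rewrite inE group1.
pose r (i : 'I_n) : 'I_n := odflt i [pick j in orb i].
have r_in i : r i \in orb i.
  by rewrite /r; case: pickP => [j|/(_ i)]; rewrite ?orb_refl.
have r_eq i j : orb i = orb j -> r i = r j.
  by move=> e; rewrite /r e; case: pickP => [k //|/(_ j)]; rewrite orb_refl.
have ex_h i : exists h, (h \in H') && (a (r i) h == i).
  have : i \in orb (r i) by rewrite (orb_eq _ _ (r_in i)) orb_refl.
  by rewrite inE => /existsP.
pose hs (i : 'I_n) := odflt 1 [pick h in H' | a (r i) h == i].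
have hs_spec i : (hs i \in H') && (a (r i) (hs i) == i).
  rewrite /hs; case: pickP => [h //|none].
  by have [h hh] := ex_h i; have := none h; rewrite hh.
pose c (h : gT) : 'rV[int]_n :=
  \sum_(i < n | hs i == h) x 0 i *: delta_mx 0 (r i).
exists c.
have dR k h : h \in G -> delta_mx (0 : 'I_1) k *m rep (alat G H xs act) h = delta_mx (0 : 'I_1) (a k h).
  move=> Gh; apply/rowP=> j; rewrite -rowE !mxE -aE // nth_eq_uniq //.
  by rewrite eqxx /= natz eq_sym.
have cR h : h \in H' -> c h *m rep (alat G H xs act) h = \sum_(i < n | hs i == h) x 0 i *: delta_mx 0 i.
  move=> Hh; rewrite mulmx_suml; apply: eq_bigr => i /eqP hi.
  by rewrite -scalemxAl dR ?sHG' // -hi (eqP (proj2 (andP (hs_spec i)))).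
rewrite (eq_bigr (fun h => \sum_(i < n | hs i == h) x 0 i *: (delta_mx 0 i - delta_mx 0 (r i)))); last first.
  move=> h Hh; rewrite cR // /c -sumrB; apply: eq_bigr => i _.
  by rewrite scalerBr.
have -> : \sum_(h in H') \sum_(i < n | hs i == h) x 0 i *: (delta_mx 0 i - delta_mx 0 (r i))
   = \sum_(i < n) x 0 i *: (delta_mx (0 : 'I_1) i - delta_mx 0 (r i)).
  symmetry; rewrite (partition_big hs (fun h => h \in H')) //=; last first.
    by move=> i _; case/andP: (hs_spec i).
rewrite (eq_bigr (fun i => x 0 i *: delta_mx (0 : 'I_1) i - x 0 i *: delta_mx 0 (r i))); last first.
  by move=> i _; rewrite scalerBr.
rewrite sumrB -row_sum_delta.
suff -> : \sum_(i < n) x 0 i *: delta_mx (0 : 'I_1) (r i) = 0 by rewrite subr0.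
apply/rowP=> j; rewrite summxE mxE.
case: (pickP [pred i | r i == j]) => [i0 /= /eqP ri0|none]; last first.
  by rewrite big1 // => i _; rewrite !mxE; have := none i; rewrite /= eq_sym => ->; rewrite ?andbF ?mulr0.
have oj : orb j = orb i0 by rewrite -ri0; apply: orb_eq; apply: r_in.
transitivity (\sum_(i in orb j) x 0 i); last exact: zs.
rewrite [RHS]big_mkcond /=; apply: eq_bigr => i _; rewrite !mxE /= eq_sym.
have -> : (r i == j) = (i \in orb j).
  apply/eqP/idP => [<-|ij].
    by rewrite (orb_eq _ _ (r_in i)) orb_refl.
  by rewrite -ri0; apply: r_eq; rewrite (orb_eq _ _ ij) oj.
by case: (i \in orb j); rewrite ?mulr1 ?mulr0.
Qed.

End AlatFlabby.

End Part5.

Section Part6.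
Import GRing.Theory.
Local Open Scope ring_scope.

Definition actC := actR RCl.
Definition actD := actR RDl.
Definition actS := actR RSl.
Definition actP := actR RPl.

Lemma goodC : goodb XCl actC. Proof. by vm_compute. Qed.
Lemma goodD : goodb XDl actD. Proof. by vm_compute. Qed.
Lemma goodS : goodb XSl actS. Proof. by vm_compute. Qed.
Lemma goodP : goodb XPl actP. Proof. by vm_compute. Qed.

Definition stablist (act : seq nat -> seq nat -> seq nat) (x : seq nat) :=
  filter (fun L => act x L == x) A5list.
Definition stabsz xs act s := all (fun x => size (stablist act x) == s) xs.
Lemma stabC : stabsz XCl actC 5. Proof. by vm_compute. Qed.
Lemma stabD : stabsz XDl actD 10. Proof. by vm_compute. Qed.
Lemma stabS : stabsz XSl actS 6. Proof. by vm_compute. Qed.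

Definition orbseq (L : seq nat) : seq nat :=
  [:: 0; ap L 0; ap L (ap L 0); ap L (ap L (ap L 0)); ap L (ap L (ap L (ap L 0)))]%N.
Definition pgram (s : seq nat) : seq nat :=
  [:: nth 0 s 0; nth 0 s 2; nth 0 s 4; nth 0 s 1; nth 0 s 3]%N.
Definition x0C L := let y := canon RCl (orbseq L) in
  if y \in XCl then y else canon RCl (pgram (orbseq L)).
Definition x0D L := canon RDl (orbseq L).
Definition x0S L := canon RSl (filter (fun k => ap L k == k) id5 ++ filter (fun k => ap L k != k) id5).
Definition ordk k L := (L != id5) && (lpow L k == id5).
Definition conjL Lu Lt := lcomp (lcomp (linv Lu) Lt) Lu.

Definition chkC := all (fun L => ordk 5 L ==>
  (x0C L \in XCl) && all (fun k => actC (x0C L) (lpow L k) == x0C L) (iota 0 5)) A5list.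
Definition chkD := all (fun Lc => ordk 5 Lc ==>
  (x0D Lc \in XDl) && all (fun Lu => has (fun k => conjL Lu Lc == lpow Lc k) [:: 1; 2; 3; 4]%N
      ==> (actD (x0D Lc) Lu == x0D Lc)) A5list) A5list.
Definition chkS := all (fun Lt => ordk 3 Lt ==>
  (x0S Lt \in XSl) && all (fun Lu => has (fun k => conjL Lu Lt == lpow Lt k) [:: 1; 2]%N
      ==> (actS (x0S Lt) Lu == x0S Lt)) A5list) A5list.
Lemma chkC_ok : chkC. Proof. by vm_compute. Qed.
Lemma chkD_ok : chkD. Proof. by vm_compute. Qed.
Lemma chkS_ok : chkS. Proof. by vm_compute. Qed.

Definition linv_chk2 := all (fun L => all (fun a => all (fun b =>
  (ap (linv L) a == b) == (ap L b == a)) (iota 0 5)) (iota 0 5)) A5list.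
Lemma linv_chk2_ok : linv_chk2. Proof. by vm_compute. Qed.

Definition repf (act : seq nat -> seq nat -> seq nat) xs L (i j : nat) : int :=
  (act (nth [::] xs i) L == nth [::] xs j)%:Z.
Definition Sf (i j : nat) : int := (nth 0%N Sell i == j)%:Z.
Definition Pmf := tabf Pmtab.
Definition imf := tabf imtab.
Definition Rmf := tabf Rmtab.
Definition thf := tabf thtab.
Definition thif := tabf thitab.
Definition fJ (L : seq nat) (k l : nat) : int :=
  (ap L k.+1 == l.+1)%:Z - (ap L k.+1 == 0%N)%:Z.
Definition SRf L (i j : nat) : int := repf actP XPl L (nth 0%N Sell i) j.
Definition fF L (i j : nat) : int :=
  tabf Pmtab (index (actP (nth [::] XPl (nth 0%N Sell i)) L) XPl) j.

Definition prodf p (f g : nat -> nat -> int) (i j : nat) : int :=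
  sumz [seq f i k * g k j | k <- iota 0 p].
Definition addf (f g : nat -> nat -> int) (i j : nat) : int := f i j + g i j.

Definition chkF := all (fun L => mulcheck 16 20 20 Sf (repf actP XPl L) (SRf L)
   && mulcheck 16 20 16 (SRf L) Pmf (fF L)) A5list.
Lemma chkF_ok : chkF. Proof. by vm_compute. Qed.

Definition chkJ := all (fun L => mulcheck 4 4 20 (fJ L) imf (prodf 20 imf (repf actP XPl L))) A5list.
Lemma chkJ_ok : chkJ. Proof. by vm_compute. Qed.

Lemma chk_iR : mulcheck 4 20 4 imf Rmf idf. Proof. by vm_compute. Qed.
Lemma chk_iP : mulcheck 4 20 16 imf Pmf zf. Proof. by vm_compute. Qed.
Lemma chk_SP : mulcheck 16 20 16 Sf Pmf idf. Proof. by vm_compute. Qed.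
Lemma chk_Ri : mulcheck 20 4 20 Rmf imf (prodf 4 Rmf imf). Proof. by vm_compute. Qed.
Lemma chk_PS : mulcheck 20 16 20 Pmf Sf (prodf 16 Pmf Sf). Proof. by vm_compute. Qed.
Lemma chk_RiPS : eqcheck 20 20 (addf (prodf 4 Rmf imf) (prodf 16 Pmf Sf)) idf.
Proof. by vm_compute. Qed.

Definition srcf L := blockf 12 12 (repf actC XCl L) (repf actS XSl L).
Definition dstf L := blockf 6 6 (repf actD XDl L) (fF L).
Definition chkTh := all (fun L => mulcheck 22 22 22 (srcf L) thf (prodf 22 thf (dstf L))) A5list.
Lemma chkTh_ok : chkTh. Proof. by vm_compute. Qed.
Lemma chk_thi : mulcheck 22 22 22 thf thif idf. Proof. by vm_compute. Qed.
Lemma chk_ith : mulcheck 22 22 22 thif thf idf. Proof. by vm_compute. Qed.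

End Part6.

Section Part7.
Import GRing.Theory.
Local Open Scope ring_scope.

Lemma mulmxE_f n p m (f g : nat -> nat -> int) :
  \matrix_(i < n, j < p) f i j *m \matrix_(i < p, j < m) g i j
  = \matrix_(i < n, j < m) prodf p f g i j.
Proof.
apply/matrixP=> i j; rewrite !mxE.
rewrite (eq_bigr (fun k : 'I_p => f i k * g k j)); last by move=> k _; rewrite !mxE.
by rewrite (sumz_big p (fun k => f i k * g k j)).
Qed.

Lemma linvE L a b : L \in A5list -> (a < 5)%N -> (b < 5)%N ->
  (ap (linv L) a == b) = (ap L b == a).
Proof.
move=> HL a5 b5.
have h1 : all (fun a => all (fun b => (ap (linv L) a == b) == (ap L b == a)) (iota 0 5)) (iota 0 5).
  by move: linv_chk2_ok => /allP; apply.
move: h1 => /allP /(_ a); rewrite mem_iota a5 => /(_ isT) /allP /(_ b).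
by rewrite mem_iota b5 => /(_ isT) /eqP.
Qed.

Lemma allE (T : eqType) (a : pred T) s x : all a s -> x \in s -> a x.
Proof. by move/allP; apply. Qed.

Section Final.
Variables (gT : finGroupType) (G H : {group gT}).
Hypotheses (sHG : H \subset G) (cardG : #|G| = 60%N) (cardH : #|H| = 12%N)
  (simG : simple G).
Local Notation Lg := (Lg G H).
Local Notation cs := (coset_seq G H).
Let LA5 := Lg_A5 sHG cardG cardH simG.
Let Lmul := Lg_mul sHG cardG cardH.
Let Linj := Lg_inj sHG cardG cardH simG.
Let L1 := Lg1 sHG cardG cardH.
Let Linv := Lg_inv sHG cardG cardH simG.
Let scs := size_cs sHG cardG cardH.

Lemma Lg_exp g k : g \in G -> Lg (g ^+ k)%g = lpow (Lg g) k.
Proof.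
move=> Gg; elim: k => [|k IH]; first by rewrite expg0 L1.
by rewrite expgSr Lmul ?groupX // IH.
Qed.

Lemma ordk_Lg g k : g \in G -> #[g]%g = k -> (1 < k)%N -> ordk k (Lg g).
Proof.
move=> Gg og k1; apply/andP; split.
  apply/eqP=> e; have : g = 1%g by apply: Linj; rewrite ?group1 // L1.
  by move=> g1; move: og k1; rewrite g1 order1 => <-.
by rewrite -Lg_exp // -og expg_order L1.
Qed.

Lemma stab_card xs act (good : goodb xs act) (K : {group gT}) x0 :
  K \subset G -> x0 \in xs -> (forall k, k \in K -> act x0 (Lg k) = x0) ->
  #|K| = size (stablist act x0) ->
  forall g, g \in G -> (act x0 (Lg g) == x0) = (g \in K).
Proof.
move=> sKG x0in fixK cK g Gg; apply/idP/idP => [fx|Kg]; last by rewrite fixK.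
have U : uniq (map Lg (enum K)).
  rewrite map_inj_in_uniq ?enum_uniq // => u v; rewrite !mem_enum => Ku Kv.
  by apply: Linj; apply: (subsetP sKG).
have S : {subset map Lg (enum K) <= stablist act x0}.
  move=> L /mapP [k]; rewrite mem_enum => Kk ->.
  by rewrite mem_filter fixK // eqxx LA5 // (subsetP sKG).
have sz : (size (stablist act x0) <= size (map Lg (enum K)))%N.
  by rewrite size_map -cardE cK.
have [_ eqs] := uniq_min_size U S sz.
have : Lg g \in stablist act x0 by rewrite mem_filter fx LA5.
rewrite -eqs => /mapP [k]; rewrite mem_enum => Kk e.
by rewrite (Linj Gg (subsetP sKG k Kk) e).
Qed.

Definition CL := alat G H XCl actC.
Definition DL := alat G H XDl actD.
Definition SL := alat G H XSl actS.
Definition PL := alat G H XPl actP.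

Definition Smx : 'M[int]_(16, size XPl) := \matrix_(i, j) Sf i j.
Definition Pmx : 'M[int]_(size XPl, 16) := \matrix_(i, j) Pmf i j.
Definition imx : 'M[int]_(rk (Jchev G H), size XPl) := \matrix_(i, j) imf i j.
Definition Rmx : 'M[int]_(size XPl, rk (Jchev G H)) := \matrix_(i, j) Rmf i j.
Definition FL : lattice gT := @Lattice gT 16 (fun g => Smx *m rep PL g *m Pmx).

Lemma repPL g : rep PL g = \matrix_(i < size XPl, j < size XPl) repf actP XPl (Lg g) i j.
Proof. by []. Qed.

Lemma I1 : imx *m Rmx = 1%:M.
Proof.
have e : mulcheck (size cs).-1 (size XPl) (size cs).-1 imf Rmf idf.
  by rewrite scs; exact: chk_iR.
by rewrite /imx /Rmx (mulcheckP e) idfE.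
Qed.
Lemma I2 : imx *m Pmx = 0.
Proof.
have e : mulcheck (size cs).-1 (size XPl) 16 imf Pmf zf.
  by rewrite scs; exact: chk_iP.
by rewrite /imx /Pmx (mulcheckP e) zfE.
Qed.
Lemma I3 : Smx *m Pmx = 1%:M.
Proof. by rewrite /Smx /Pmx (mulcheckP chk_SP) idfE. Qed.
Lemma I4 : Rmx *m imx + Pmx *m Smx = 1%:M.
Proof.
have e1 : mulcheck (size XPl) (size cs).-1 (size XPl) Rmf imf (prodf 4 Rmf imf).
  by rewrite scs; exact: chk_Ri.
rewrite /Rmx /imx /Pmx /Smx (mulcheckP e1) (mulcheckP chk_PS) -idfE.
rewrite -(eqcheckP chk_RiPS); apply/matrixP=> i j; rewrite !mxE.
by [].
Qed.

Lemma repJ g : g \in G ->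
  rep (Jchev G H) g = \matrix_(k < (size cs).-1, l < (size cs).-1) fJ (Lg g) k l.
Proof.
move=> Gg; apply/matrixP=> k l; rewrite /= !mxE.
have k4 : (k.+1 < 5)%N by rewrite -scs -ltn_predRL ltn_ord.
have l4 : (l.+1 < 5)%N by rewrite -scs -ltn_predRL ltn_ord.
rewrite !(pmat_Lg sHG cardG cardH) ?groupV // Linv //.
by rewrite /fJ !linvE ?LA5 // mem_iota.
Qed.

Lemma I5 g : g \in G -> rep (Jchev G H) g *m imx = imx *m rep PL g.
Proof.
move=> Gg; rewrite repJ // repPL /imx.
have := chkJ_ok => /allP /(_ _ (LA5 Gg)) e.
have e' : mulcheck (size cs).-1 (size cs).-1 (size XPl) (fJ (Lg g)) imf
                   (prodf (size XPl) imf (repf actP XPl (Lg g))).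
  by rewrite scs; exact: e.
by rewrite (mulcheckP e') mulmxE_f.
Qed.

Lemma PL_glat : is_Glattice G PL.
Proof. exact (alat_glat sHG cardG cardH simG goodP). Qed.

Lemma FL_glat : is_Glattice G FL.
Proof.
have [r1 rM] := PL_glat.
split.
  by change (Smx *m rep PL 1 *m Pmx = 1%:M); rewrite r1 mulmx1 I3.
move=> g h Gg Gh.
change (Smx *m rep PL (g * h)%g *m Pmx = (Smx *m rep PL g *m Pmx) *m (Smx *m rep PL h *m Pmx)).
rewrite rM //.
have PS : Pmx *m Smx = 1%:M - Rmx *m imx by rewrite -I4 [_ + Pmx *m Smx]addrC addrK.
have Z : Smx *m rep PL g *m (Rmx *m imx) *m rep PL h *m Pmx = 0.
  by rewrite -!mulmxA (mulmxA imx) -I5 // -!mulmxA I2 !mulmx0.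
rewrite !mulmxA -(mulmxA _ Pmx Smx) PS mulmxBr mulmx1 !mulmxBl Z subr0.
by rewrite ?mulmxA.
Qed.

Lemma PS_eq : Pmx *m Smx = 1%:M - Rmx *m imx.
Proof. by rewrite -I4 [_ + Pmx *m Smx]addrC addrK. Qed.

Lemma FL_sexact : short_exact G (Jchev G H) PL FL imx Pmx.
Proof.
split.
- by move=> g Gg; exact: I5.
- move=> g Gg.
  change (rep PL g *m Pmx = Pmx *m (Smx *m rep PL g *m Pmx)).
  have Z : Rmx *m imx *m rep PL g *m Pmx = 0.
    by rewrite -!mulmxA (mulmxA imx) -I5 // -!mulmxA I2 !mulmx0.
  by rewrite !mulmxA PS_eq mulmxBl mul1mx mulmxBl Z subr0.
- move=> u Hu.
  by rewrite -[u]mulmx1 -I1 mulmxA Hu mul0mx.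
- split; first exact: I2.
  move=> v Hv; exists (v *m Rmx).
  by rewrite -{2}[v]mulmx1 -I4 mulmxDr !mulmxA Hv mul0mx addr0.
- move=> w; exists (w *m Smx).
  by rewrite -mulmxA I3 mulmx1.
Qed.

Definition Thmx : 'M[int]_(size XCl + size XSl, size XDl + 16) := \matrix_(i, j) thf i j.
Definition Thimx : 'M[int]_(size XDl + 16, size XCl + size XSl) := \matrix_(i, j) thif i j.

Lemma repFL g : g \in G -> rep FL g = \matrix_(i < 16, j < 16) fF (Lg g) i j.
Proof.
move=> Gg; change (Smx *m rep PL g *m Pmx = \matrix_(i < 16, j < 16) fF (Lg g) i j).
have /allP /(_ _ (LA5 Gg)) /andP [c1 c2] := chkF_ok.
by rewrite repPL /Smx (mulcheckP c1) /Pmx (mulcheckP c2).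
Qed.

Lemma isoTh : lat_iso G (dsum CL SL) (dsum DL FL).
Proof.
exists Thmx, Thimx; split.
- by rewrite /Thmx /Thimx (mulcheckP chk_thi) idfE.
- by rewrite /Thmx /Thimx (mulcheckP chk_ith) idfE.
- move=> g Gg.
  change (block_mx (rep CL g) 0 0 (rep SL g) *m Thmx = Thmx *m block_mx (rep DL g) 0 0 (rep FL g)).
  rewrite repFL //.
  have eC : rep CL g = \matrix_(i < size XCl, j < size XCl) repf actC XCl (Lg g) i j by [].
  have eS : rep SL g = \matrix_(i < size XSl, j < size XSl) repf actS XSl (Lg g) i j by [].
  have eD : rep DL g = \matrix_(i < size XDl, j < size XDl) repf actD XDl (Lg g) i j by [].
  rewrite eC eS eD !blockfE.
  have /allP /(_ _ (LA5 Gg)) e := chkTh_ok.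
  by rewrite /Thmx (mulcheckP e) mulmxE_f.
Qed.

Lemma FL_flabby : flabby G FL.
Proof.
apply: flabby_dsum_r.
apply: (flabby_iso isoTh).
apply: flabby_dsum.
  exact (alat_flabby sHG cardG cardH simG goodC).
exact (alat_flabby sHG cardG cardH simG goodS).
Qed.

Let actg_1' := actg_1 sHG cardG cardH.

Lemma stab_gs xs act (good : goodb xs act) x0 : x0 \in xs ->
  group_set [set g in G | act x0 (Lg g) == x0].
Proof.
move=> x0in; apply/group_setP; split; first by rewrite inE group1 (actg_1' good x0in) eqxx.
move=> x y; rewrite !inE => /andP [Gx /eqP ex] /andP [Gy /eqP ey].
by rewrite groupM // -(actg_mul sHG cardG cardH simG good) // ex ey eqxx.
Qed.

Definition x0P : seq nat := [:: 0; 1; 2; 3; 4]%N.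
Lemma x0P_in : x0P \in XPl. Proof. by vm_compute. Qed.
Definition KP := Group (stab_gs goodP x0P_in).

Lemma isoP : lat_iso G (Zperm G KP) PL.
Proof.
apply: (alat_transport sHG cardG cardH simG goodP (_ : KP \subset G) x0P_in).
  by apply/subsetP=> g; rewrite inE => /andP [].
by move=> g Gg; rewrite inE Gg.
Qed.

Lemma PL_perm : is_permutation G PL.
Proof.
exists [:: KP]; split.
  by rewrite /= andbT; apply/subsetP=> g; rewrite inE => /andP [].
apply: lat_iso_trans (lat_iso_sym isoP) _.
exact: lat_iso_zero.
Qed.

Lemma conj_pow (K : {group gT}) c p : K \subset G -> c \in K -> #[c]%g = p ->
  #|K| = (p * 2)%N -> (1 < p)%N ->
  forall u, u \in K -> exists2 k, (0 < k < p)%N & conjL (Lg u) (Lg c) = lpow (Lg c) k.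
Proof.
move=> sKG Kc oc cK p1 u Ku.
have Gu := subsetP sKG u Ku; have Gc := subsetP sKG c Kc.
have sCK : <[c]>%g \subset K by rewrite cycle_subG.
have nc : (<[c]> <| K)%g.
  apply: index2_normal => //.
  have := Lagrange sCK; rewrite cK -[#|<[c]>%g|]/(#[c]%g) oc.
  by move/eqP; rewrite eqn_pmul2l ?(ltnW p1) // => /eqP.
have : (c ^ u)%g \in <[c]>%g.
  by rewrite memJ_norm ?cycle_id // (subsetP (normal_norm nc)).
case/cyclePmin => k; rewrite oc => kp e.
exists k.
  rewrite kp andbT lt0n; apply/eqP => k0; move: e; rewrite k0 expg0 => /eqP.
  rewrite conjg_eq1 => /eqP c1; move: oc p1; rewrite c1 order1 => <-.
  by [].
by rewrite -Lg_exp // -e conjgE mulgA /conjL !Lmul ?groupM ?groupV // Linv //.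
Qed.

Lemma isoC (C5 : {group gT}) : C5 \subset G -> cyclic C5 -> #|C5| = 5%N ->
  lat_iso G (Zperm G C5) CL.
Proof.
move=> sCG /cyclicP [c eC] cC.
have Cc : c \in C5 by rewrite eC cycle_id.
have Gc := subsetP sCG c Cc.
have oc : #[c]%g = 5%N by rewrite /order -eC cC.
have ok := ordk_Lg Gc oc isT.
have := allE chkC_ok (LA5 Gc).
rewrite ok implyTb => /andP [x0in hk].
apply: (alat_transport sHG cardG cardH simG goodC sCG x0in).
apply: (stab_card goodC sCG x0in).
  move=> u; rewrite eC => /cyclePmin [k]; rewrite oc => k5 ->.
  rewrite Lg_exp //; apply/eqP; apply: (@allE _ _ _ k hk).
  by rewrite mem_iota.
by rewrite cC; move: stabC; rewrite /stabsz => /allP /(_ _ x0in) /eqP ->.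
Qed.

Lemma isoD (D5 : {group gT}) : D5 \subset G -> D5 \isog 'D_10 ->
  lat_iso G (Zperm G D5) DL.
Proof.
move=> sDG iD.
have cD : #|D5| = 10%N by rewrite (card_isog iD); exact: (card_dihedral (q:=5)).
have d5 : (5 %| #|D5|)%N by rewrite cD.
have [c Dc oc] := @Cauchy _ 5 D5 isT d5.
have Gc := subsetP sDG c Dc.
have ok := ordk_Lg Gc oc isT.
have := allE chkD_ok (LA5 Gc).
rewrite ok implyTb => /andP [x0in hk].
apply: (alat_transport sHG cardG cardH simG goodD sDG x0in).
apply: (stab_card goodD sDG x0in).
  move=> u Du; have Gu := subsetP sDG u Du.
  have [k kp e] := conj_pow sDG Dc oc (cD : #|D5| = 5 * 2)%N isT Du.
  apply/eqP; move: (allE hk (LA5 Gu)) => /implyP; apply.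
  apply/hasP; exists k; last by rewrite e.
  by rewrite (_ : [:: 1; 2; 3; 4]%N = iota 1 4) // mem_iota.
by rewrite cD; move: stabD; rewrite /stabsz => /allP /(_ _ x0in) /eqP ->.
Qed.

Lemma isoS (S3 : {group gT}) : S3 \subset G -> S3 \isog 'Sym_('I_3) ->
  lat_iso G (Zperm G S3) SL.
Proof.
move=> sSG iS.
have cS : #|S3| = 6%N by rewrite (card_isog iS) card_Sym card_ord.
have d3 : (3 %| #|S3|)%N by rewrite cS.
have [c Sc oc] := @Cauchy _ 3 S3 isT d3.
have Gc := subsetP sSG c Sc.
have ok := ordk_Lg Gc oc isT.
have := allE chkS_ok (LA5 Gc).
rewrite ok implyTb => /andP [x0in hk].
apply: (alat_transport sHG cardG cardH simG goodS sSG x0in).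
apply: (stab_card goodS sSG x0in).
  move=> u Su; have Gu := subsetP sSG u Su.
  have [k kp e] := conj_pow sSG Sc oc (cS : #|S3| = 3 * 2)%N isT Su.
  apply/eqP; move: (allE hk (LA5 Gu)) => /implyP; apply.
  apply/hasP; exists k; last by rewrite e.
  by rewrite (_ : [:: 1; 2]%N = iota 1 2) // mem_iota.
by rewrite cS; move: stabS; rewrite /stabsz => /allP /(_ _ x0in) /eqP ->.
Qed.

End Final.

End Part7.


Theorem theorem1p3 (gT : finGroupType) (G H C5 S3 D5 : {group gT}) :
  G \isog 'Alt_('I_5) ->
  H \subset G -> H \isog 'Alt_('I_4) ->
  C5 \subset G -> cyclic C5 -> #|C5| = 5 ->
  S3 \subset G -> S3 \isog 'Sym_('I_3) ->
  D5 \subset G -> D5 \isog 'D_10 ->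
  exists (P F : lattice gT)
         (i : 'M[int]_(rk (Jchev G H), rk P)) (p : 'M[int]_(rk P, rk F)),
    [/\ flabby_resolution G (Jchev G H) P F i p,
        rk F = 16,
        lat_iso G (dsum (Zperm G C5) (Zperm G S3)) (dsum (Zperm G D5) F)
      & stably_permutation G F].
Proof.
move=> iG sHG iH sC5 cC5 cardC5 sS3 iS3 sD5 iD5.
have cardG : #|G| = 60%N.
  rewrite (card_isog iG); have := card_Alt (T:='I_5); rewrite card_ord => /(_ isT).
  by move/eqP; rewrite -[5`!]/(2 * 60)%N eqn_pmul2l // => /eqP.
have cardH : #|H| = 12%N.
  rewrite (card_isog iH); have := card_Alt (T:='I_4); rewrite card_ord => /(_ isT).
  by move/eqP; rewrite -[4`!]/(2 * 12)%N eqn_pmul2l // => /eqP.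
have simG : simple G by rewrite (isog_simple iG) simple_Alt5 // card_ord.
have main : lat_iso G (dsum (Zperm G C5) (Zperm G S3)) (dsum (Zperm G D5) (FL G H)).
  apply: lat_iso_trans (lat_iso_dsum (isoC sHG cardG cardH simG sC5 cC5 cardC5)
                                     (isoS sHG cardG cardH simG sS3 iS3)) _.
  apply: lat_iso_trans (isoTh sHG cardG cardH simG) _.
  apply: lat_iso_dsum; first exact: lat_iso_sym (isoD sHG cardG cardH simG sD5 iD5).
  exact: lat_iso_refl.
exists (PL G H), (FL G H), (imx G H), Pmx; split=> //.
- split.
  + exact (PL_glat sHG cardG cardH simG).
  + exact (FL_glat sHG cardG cardH simG).
  + exact (FL_sexact sHG cardG cardH simG).
  + exact (PL_perm sHG cardG cardH simG).
  + exact (FL_flabby sHG cardG cardH simG).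
- exists (Zperm G D5), (dsum (Zperm G C5) (Zperm G S3)); split.
  + exists [:: D5]; split; first by rewrite /= sD5.
    exact: lat_iso_zero.
  + exists [:: C5; S3]; split; first by rewrite /= sC5 sS3.
    exact: lat_iso_dsum (lat_iso_refl _ _) (lat_iso_zero _ _).
  + exact: lat_iso_trans (lat_iso_comm _ _ _) (lat_iso_sym main).
Qed.
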